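(* Consider the sub-$\ell^\infty$ structure on $\mathbb{R}^2$ defined by $Y_1=\partial_x+x\partial_y$, $Y_2=\partial_x-x\partial_y$. A regular bang-bang trajectory with $4$ or more arcs is not a time-minimizer.
   Context: Sub-$\ell^\infty$ structure defined by smooth vector fields $X_1,\dots,X_k$ on a manifold $M$ (here $X_1=Y_1$, $X_2=Y_2$): an admissible trajectory is an absolutely continuous curve $\gamma:[0,T]\to M$ together with a measurable control $u=(u_1,\dots,u_k):[0,T]\to\mathbb{R}^k$ with $|u_i(t)|\le1$ for all $i$ and a.e. $t$, such that $\dot\gamma(t)=\sum_i u_i(t)X_i(\gamma(t))$ for a.e. $t$. It is a time-minimizer (optimal) if no admissible trajectory joins $\gamma(0)$ to $\gamma(T)$ in time less than $T$. An extremal pair is a pair $(\lambda,\gamma)$ where $\gamma$ is admissible with control $u$ and $\lambda:[0,T]\to T^*M$ is absolutely continuous with $\lambda(t)\in T^*_{\gamma(t)}M\setminus\{0\}$, such that, with $\mathcal H(\lambda,p,u)=\sum_i u_i\langle\lambda,X_i(p)\rangle$, in canonical coordinates $\dot\lambda=-\partial_p\mathcal H(\lambda,\gamma,u)$, $\dot\gamma=\partial_\lambda\mathcal H(\lambda,\gamma,u)$ a.e., and there is a constant $\lambda_0\ge0$ with $\sum_iu_i(t)\langle\lambda(t),X_i(\gamma(t))\rangle=\sum_i|\langle\lambda(t),X_i(\gamma(t))\rangle|=\lambda_0$ for a.e. $t$; $\gamma$ is then an extremal trajectory and $\lambda$ an extremal lift. The switching functions are $\varphi_j(t)=\langle\lambda(t),X_j(\gamma(t))\rangle$.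 The restriction of an extremal pair to an open interval $I$ is a regular arc if $\varphi_j(t)\ne0$ for all $t\in I$ and all $j$; arcs are taken maximal (not contained in a strictly larger open interval with the same property). A regular bang-bang trajectory is an extremal trajectory with an extremal lift such that $[0,T]$ minus finitely many points is a finite union of maximal regular arcs (on each of which the control is then constant with values in $\{1,-1\}^k$); these are its arcs. *)

(* Defs.v *)
From Stdlib Require Import Reals Lra List.
Open Scope R_scope.

Definition Y1 (p : R * R) : R * R := (1, fst p).
Definition Y2 (p : R * R) : R * R := (1, - fst p).

Definition pairing (l v : R * R) : R := fst l * fst v + snd l * snd v.

Definition negligible (N : R -> Prop) : Prop :=
  forall eps, 0 < eps ->
    exists a b : nat -> R,
      (forall n, a n <= b n) /\
      (forall t, N t -> exists n, a n < t < b n) /\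
      (forall n, sum_f_R0 (fun k => b k - a k) n <= eps).

Definition ae_on (T : R) (P : R -> Prop) : Prop :=
  exists N, negligible N /\ forall t, 0 < t < T -> ~ N t -> P t.

Inductive borel : (R -> Prop) -> Prop :=
| borel_interval a b : borel (fun t => a < t < b)
| borel_compl A : borel A -> borel (fun t => ~ A t)
| borel_union (F : nat -> R -> Prop) :
    (forall n, borel (F n)) -> borel (fun t => exists n, F n t)
| borel_ext A B : (forall t, A t <-> B t) -> borel A -> borel B.

Definition measurable_fun (f : R -> R) : Prop :=
  forall c, borel (fun t => f t < c).

Definition abs_cont_on (T : R) (f : R -> R) : Prop :=
  forall eps, 0 < eps -> exists delta, 0 < delta /\
    forall (n : nat) (a b : nat -> R),
      (forall k, (k <= n)%nat -> 0 <= a k <= b k /\ b k <= T) ->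
      (forall k, (k < n)%nat -> b k <= a (S k)) ->
      sum_f_R0 (fun k => b k - a k) n < delta ->
      sum_f_R0 (fun k => Rabs (f (b k) - f (a k))) n < eps.

Definition abs_cont_on2 (T : R) (g : R -> R * R) : Prop :=
  abs_cont_on T (fun t => fst (g t)) /\ abs_cont_on T (fun t => snd (g t)).

Definition admissible (T : R) (gamma : R -> R * R) (u : R -> R * R) : Prop :=
  0 <= T /\
  measurable_fun (fun t => fst (u t)) /\ measurable_fun (fun t => snd (u t)) /\
  ae_on T (fun t => Rabs (fst (u t)) <= 1 /\ Rabs (snd (u t)) <= 1) /\
  abs_cont_on2 T gamma /\
  ae_on T (fun t =>
    derivable_pt_lim (fun s => fst (gamma s)) t
      (fst (u t) * fst (Y1 (gamma t)) + snd (u t) * fst (Y2 (gamma t))) /\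
    derivable_pt_lim (fun s => snd (gamma s)) t
      (fst (u t) * snd (Y1 (gamma t)) + snd (u t) * snd (Y2 (gamma t)))).

Definition time_minimizer (T : R) (gamma : R -> R * R) : Prop :=
  (exists u, admissible T gamma u) /\
  forall T' gamma' u', admissible T' gamma' u' ->
    gamma' 0 = gamma 0 -> gamma' T' = gamma T -> ~ (T' < T).

Definition Ham (l p u : R * R) : R :=
  fst u * pairing l (Y1 p) + snd u * pairing l (Y2 p).

Definition extremal_pair (T : R) (lam gamma u : R -> R * R) : Prop :=
  admissible T gamma u /\
  abs_cont_on2 T lam /\
  (forall t, 0 <= t <= T -> lam t <> (0, 0)) /\
  ae_on T (fun t =>
    exists dl1 dl2 dg1 dg2,
      derivable_pt_lim (fun s => fst (lam s)) t dl1 /\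
      derivable_pt_lim (fun s => snd (lam s)) t dl2 /\
      derivable_pt_lim (fun s => fst (gamma s)) t dg1 /\
      derivable_pt_lim (fun s => snd (gamma s)) t dg2 /\
      (* lambda' = - d_p H *)
      derivable_pt_lim (fun x => Ham (lam t) (x, snd (gamma t)) (u t))
        (fst (gamma t)) (- dl1) /\
      derivable_pt_lim (fun y => Ham (lam t) (fst (gamma t), y) (u t))
        (snd (gamma t)) (- dl2) /\
      (* gamma' = d_lambda H *)
      derivable_pt_lim (fun a => Ham (a, snd (lam t)) (gamma t) (u t))
        (fst (lam t)) dg1 /\
      derivable_pt_lim (fun b => Ham (fst (lam t), b) (gamma t) (u t))
        (snd (lam t)) dg2) /\
  exists lam0, 0 <= lam0 /\
    ae_on T (fun t =>
      Ham (lam t) (gamma t) (u t) = lam0 /\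
      Rabs (pairing (lam t) (Y1 (gamma t))) +
      Rabs (pairing (lam t) (Y2 (gamma t))) = lam0).

Definition phi1 (lam gamma : R -> R * R) (t : R) : R :=
  pairing (lam t) (Y1 (gamma t)).
Definition phi2 (lam gamma : R -> R * R) (t : R) : R :=
  pairing (lam t) (Y2 (gamma t)).

Definition regular_on (lam gamma : R -> R * R) (a b : R) : Prop :=
  forall t, a < t < b -> phi1 lam gamma t <> 0 /\ phi2 lam gamma t <> 0.

Definition maximal_regular_arc (T : R) (lam gamma : R -> R * R) (a b : R) : Prop :=
  0 <= a /\ a < b /\ b <= T /\ regular_on lam gamma a b /\
  forall a' b', 0 <= a' -> a' <= a -> b <= b' -> b' <= T ->
    (a' < a \/ b < b') -> ~ regular_on lam gamma a' b'.

Definition regular_bang_bang_arcs (T : R) (gamma : R -> R * R) (n : nat) : Prop :=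
  exists (u lam : R -> R * R) (arcs : list (R * R)) (F : list R),
    extremal_pair T lam gamma u /\
    NoDup arcs /\ length arcs = n /\
    (forall ab, In ab arcs -> maximal_regular_arc T lam gamma (fst ab) (snd ab)) /\
    (forall t, 0 <= t <= T ->
       (~ In t F <-> exists ab, In ab arcs /\ fst ab < t < snd ab)).

(* Main.v *)
Require Import Defs.
From Stdlib Require Import Reals Lra Lia List Classical ZArith.
Open Scope R_scope.

Definition acI (lo hi : R) (f : R -> R) : Prop :=
  forall eps, 0 < eps -> exists delta, 0 < delta /\
    forall (n : nat) (a b : nat -> R),
      (forall k, (k <= n)%nat -> lo <= a k <= b k /\ b k <= hi) ->
      (forall k, (k < n)%nat -> b k <= a (S k)) ->
      sum_f_R0 (fun k => b k - a k) n < delta ->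
      sum_f_R0 (fun k => Rabs (f (b k) - f (a k))) n < eps.

Fixpoint sumN (g : nat -> R) (m : nat) : R :=
  match m with O => 0 | S m' => sumN g m' + g m' end.

Lemma sumN_ext g h m : (forall k, (k < m)%nat -> g k = h k) -> sumN g m = sumN h m.
Proof.
  induction m; intros H; simpl; auto.
  rewrite IHm by (intros; apply H; lia). rewrite H by lia. auto.
Qed.

Lemma sumN_le g h m : (forall k, (k < m)%nat -> g k <= h k) -> sumN g m <= sumN h m.
Proof.
  induction m; intros H; simpl; [lra|].
  assert (sumN g m <= sumN h m) by (apply IHm; intros; apply H; lia).
  assert (g m <= h m) by (apply H; lia). lra.
Qed.

Lemma sumN_f_R0 g m : sumN g (S m) = sum_f_R0 g m.
Proof. induction m. simpl; ring. change (sumN g (S (S m))) with (sumN g (S m) + g (S m)). rewrite IHm. reflexivity. Qed.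

Lemma sum_f_R0_nonneg g M : (forall n, 0 <= g n) -> 0 <= sum_f_R0 g M.
Proof. intros H; induction M; simpl; auto. specialize (H (S M)); lra. Qed.

Lemma sum_remove g j M : (j <= M)%nat ->
  sum_f_R0 (fun n => if Nat.eqb n j then 0 else g n) M = sum_f_R0 g M - g j.
Proof.
  induction M; intros Hj.
  - assert (j = 0%nat) by lia; subst; simpl; lra.
  - rewrite !tech5.
    destruct (Nat.eq_dec j (S M)).
    + subst. rewrite Nat.eqb_refl.
      assert (sum_f_R0 (fun n => if Nat.eqb n (S M) then 0 else g n) M = sum_f_R0 g M).
      { clear IHM. assert (forall K, (K <= M)%nat -> sum_f_R0 (fun n => if Nat.eqb n (S M) then 0 else g n) K = sum_f_R0 g K).
        { induction K; intros HK; simpl. reflexivity.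
          rewrite IHK by lia. destruct (Nat.eqb_spec K M); [lia|reflexivity]. }
        apply H; lia. }
      rewrite H; lra.
    + rewrite IHM by lia. destruct (Nat.eqb_spec (S M) j); [lia|]. lra.
Qed.

Lemma sumN_inj_le (g : nat -> R) (id : nat -> nat) m M :
  (forall n, 0 <= g n) ->
  (forall k, (k < m)%nat -> (id k <= M)%nat) ->
  (forall j k, (j < m)%nat -> (k < m)%nat -> id j = id k -> j = k) ->
  sumN (fun k => g (id k)) m <= sum_f_R0 g M.
Proof.
  revert g; induction m; intros g Hg Hb Hi; simpl.
  - apply sum_f_R0_nonneg; auto.
  - set (g' := fun n => if Nat.eqb n (id m) then 0 else g n).
    assert (E : sumN (fun k => g (id k)) m = sumN (fun k => g' (id k)) m).
    { apply sumN_ext. intros k Hk. unfold g'. destruct (Nat.eqb_spec (id k) (id m)).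
      - apply Hi in e; lia.
      - auto. }
    rewrite E.
    assert (sumN (fun k => g' (id k)) m <= sum_f_R0 g' M).
    { apply IHm. intros n; unfold g'; destruct (Nat.eqb n (id m)); auto; lra.
      intros; apply Hb; lia. intros; apply Hi; auto; lia. }
    unfold g' at 2 in H. rewrite sum_remove in H by (apply Hb; lia). lra.
Qed.

Lemma nat_bound (id : nat -> nat) m : exists M, forall k, (k < m)%nat -> (id k <= M)%nat.
Proof.
  induction m. exists O; intros; lia.
  destruct IHm as [M HM]. exists (Nat.max M (id m)). intros k Hk.
  destruct (Nat.eq_dec k m). subst; lia. specialize (HM k ltac:(lia)); lia.
Qed.

Lemma sumN_nonneg g m : (forall k, (k<m)%nat -> 0 <= g k) -> 0 <= sumN g m.
Proof. intros H. induction m; simpl. lra. assert (0 <= g m) by (apply H; lia).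
  assert (0 <= sumN g m) by (apply IHm; intros; apply H; lia). lra. Qed.

Section Core.
Variables (lo hi : R) (f : R -> R) (e : R) (a b : nat -> R).

Definition Cert (x : R) : Prop :=
  exists m (sa sb : nat -> R) (id : nat -> nat),
    (forall k, (k < m)%nat -> lo <= sa k /\ sa k < sb k /\ sb k <= x) /\
    (forall k, (S k < m)%nat -> sb k <= sa (S k)) /\
    (forall k, (k < m)%nat -> a (id k) <= sa k /\ sb k <= b (id k)) /\
    (forall j i, (j < m)%nat -> (i < m)%nat -> id j = id i -> j = i) /\
    Rabs (f x - f lo) <= e * (x - lo) + sumN (fun k => Rabs (f (sb k) - f (sa k))) m.

Lemma Cert_lo : 0 <= e -> Cert lo.
Proof.
  intros He. exists O, (fun _ => 0), (fun _ => 0), (fun _ => O).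
  repeat split; intros; try lia. simpl. unfold Rminus. rewrite !Rplus_opp_r, Rabs_R0. lra.
Qed.

Lemma Cert_mono x y : 0 <= e -> x <= y -> Rabs (f y - f x) <= e * (y - x) -> Cert x -> Cert y.
Proof.
  intros He Hxy Hf (m & sa & sb & id & H1 & H2 & H3 & H4 & H5).
  exists m, sa, sb, id. split; [|split; [auto|split; [auto|split; [auto|]]]].
  - intros k Hk; destruct (H1 k Hk) as (?&?&?); repeat split; lra.
  - assert (Rabs (f y - f lo) <= Rabs (f y - f x) + Rabs (f x - f lo)).
    { replace (f y - f lo) with ((f y - f x) + (f x - f lo)) by ring. apply Rabs_triang. }
    lra.
Qed.

Lemma Cert_app x z n : 0 <= e -> lo <= x -> x < z -> a n <= x -> z <= b n ->
  Cert x -> (x = a n \/ x = lo) -> Cert z.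
Proof.
  intros He Hlo Hxz Han Hbn (m & sa & sb & id & H1 & H2 & H3 & H4 & H5) Hx.
  exists (S m), (fun k => if Nat.eqb k m then x else sa k),
    (fun k => if Nat.eqb k m then z else sb k),
    (fun k => if Nat.eqb k m then n else id k).
  refine (conj _ (conj _ (conj _ (conj _ _)))).
  - intros k Hk; destruct (Nat.eqb_spec k m); [lra|].
    destruct (H1 k ltac:(lia)) as (?&?&?). lra.
  - intros k Hk. destruct (Nat.eqb_spec k m); [lia|].
    destruct (Nat.eqb_spec (S k) m). assert (sb k <= x) by (apply H1; lia). lra.
    apply H2; lia.
  - intros k Hk; destruct (Nat.eqb_spec k m); [lra|]. apply H3; lia.
  - intros j k Hj Hk. destruct (Nat.eqb_spec j m), (Nat.eqb_spec k m); try lia.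
    + intros Hn. exfalso. destruct (H1 k ltac:(lia)) as (?&?&?). destruct (H3 k ltac:(lia)).
      rewrite <- Hn in *. destruct Hx; lra.
    + intros Hn. exfalso. destruct (H1 j ltac:(lia)) as (?&?&?). destruct (H3 j ltac:(lia)).
      rewrite Hn in *. destruct Hx; lra.
    + apply H4; lia.
  - simpl. rewrite Nat.eqb_refl.
    rewrite (sumN_ext _ (fun k => Rabs (f (sb k) - f (sa k)))).
    2:{ intros k Hk. destruct (Nat.eqb_spec k m); [lia|auto]. }
    assert (Rabs (f z - f lo) <= Rabs (f z - f x) + Rabs (f x - f lo)).
    { replace (f z - f lo) with ((f z - f x) + (f x - f lo)) by ring. apply Rabs_triang. }
    assert (e * (x - lo) <= e * (z - lo)) by (apply Rmult_le_compat_l; lra). lra.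
Qed.

End Core.

Lemma core0 (lo hi : R) f : lo <= hi -> acI lo hi f ->
  (forall eps, 0 < eps -> exists a b : nat -> R, (forall n, a n <= b n) /\
     (forall n, sum_f_R0 (fun k => b k - a k) n <= eps) /\
     (forall t, lo <= t <= hi -> (exists n, a n < t < b n) \/ derivable_pt_lim f t 0)) ->
  f hi = f lo.
Proof.
  intros Hlh Hac Hcov.
  assert (Main : forall e eps, 0 < e -> 0 < eps -> Rabs (f hi - f lo) <= e * (hi - lo) + eps).
  { intros e eps He Heps.
    destruct (Hac eps Heps) as (delta & Hd & Hacd).
    destruct (Hcov (delta/2) ltac:(lra)) as (a & b & Hab & Hsum & Hc).
    set (E := fun x => lo <= x <= hi /\ forall y, lo <= y <= x -> Cert lo f e a b y).
    assert (HEb : bound E). { exists hi. intros x [Hx _]. lra. }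
    assert (HElo : E lo). { split. lra. intros y Hy. replace y with lo by lra. apply Cert_lo; lra. }
    destruct (completeness E HEb (ex_intro _ lo HElo)) as (c & Hub & Hlub).
    assert (Hloc : lo <= c) by (apply Hub; auto).
    assert (Hchi : c <= hi) by (apply Hlub; intros x [Hx _]; lra).
    assert (Below : forall y, lo <= y < c -> Cert lo f e a b y).
    { intros y Hy. destruct (classic (exists x, E x /\ y < x)) as [(x & [Hx1 Hx2] & Hyx)|Hn].
      - apply Hx2; lra.
      - exfalso. assert (c <= y). { apply Hlub. intros x Hx. destruct (Rle_dec x y); auto.
          exfalso; apply Hn; exists x; split; auto; lra. } lra. }
    assert (Ext : exists r, c < r /\ forall y, lo <= y <= Rmin r hi -> Cert lo f e a b y).
    { destruct (Hc c ltac:(lra)) as [(n & Hn1 & Hn2)|Hd0].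
      - exists (b n). split; [lra|]. intros y Hy.
        destruct (Rlt_dec y c) as [Hyc|Hyc]; [apply Below; lra|apply Rnot_lt_le in Hyc].
        set (y0 := Rmax lo (a n)).
        assert (Hy0 : y0 <= c) by (unfold y0; apply Rmax_lub; lra).
        assert (Cy0 : Cert lo f e a b y0).
        { destruct (Rlt_dec y0 c). apply Below; split; auto; apply Rmax_l.
          assert (y0 = lo). { unfold y0 in *. destruct (Rle_dec lo (a n)).
            rewrite Rmax_right in * by lra. lra. rewrite Rmax_left in * by lra. lra. }
          rewrite H. apply Cert_lo; lra. }
        assert (Hymin : y <= b n /\ y <= hi).
        { pose proof (Rmin_l (b n) hi); pose proof (Rmin_r (b n) hi); lra. }
        destruct (Req_dec y0 y) as [E0|E0]. rewrite <- E0; auto.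
        apply (Cert_app lo f e a b y0 y n); auto; try lra.
        + apply Rmax_l.
        + apply Rmax_r.
        + unfold y0. destruct (Rle_dec lo (a n)). rewrite Rmax_right by lra; auto.
          rewrite Rmax_left by lra; auto.
      - destruct (Hd0 e He) as (eta & Heta).
        assert (Hloc2 : forall z, Rabs (z - c) < eta -> Rabs (f z - f c) <= e * Rabs (z - c)).
        { intros z Hz. destruct (Req_dec z c). subst. unfold Rminus; rewrite !Rplus_opp_r, Rabs_R0; lra.
          specialize (Heta (z - c) ltac:(lra) Hz). replace (c + (z - c)) with z in Heta by ring.
          rewrite Rminus_0_r in Heta. unfold Rdiv in Heta. rewrite Rabs_mult, Rabs_inv in Heta.
          assert (0 < Rabs (z - c)) by (apply Rabs_pos_lt; lra).
          apply Rmult_lt_compat_r with (r := Rabs (z - c)) in Heta; auto.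
          rewrite Rmult_assoc, Rinv_l in Heta by lra. lra. }
        pose proof (cond_pos eta) as Hep.
        exists (c + eta/2). split; [lra|]. intros y Hy.
        destruct (Rlt_dec y c) as [Hyc|Hyc]; [apply Below; lra|apply Rnot_lt_le in Hyc].
        assert (Hymin : y <= c + eta/2 /\ y <= hi).
        { pose proof (Rmin_l (c + eta/2) hi); pose proof (Rmin_r (c+eta/2) hi); lra. }
        set (w0 := Rmax lo (c - eta/2)).
        assert (Hw0 : w0 <= c /\ lo <= w0 /\ c - eta/2 <= w0) by (unfold w0; split; [apply Rmax_lub; lra| split; [apply Rmax_l|apply Rmax_r]]).
        assert (Cw0 : Cert lo f e a b w0).
        { destruct (Rlt_dec w0 c). apply Below; lra.
          assert (w0 = lo). { unfold w0 in *. destruct (Rle_dec lo (c - eta/2)).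
            rewrite Rmax_right in * by lra. lra. rewrite Rmax_left in * by lra. lra. }
          rewrite H. apply Cert_lo; lra. }
        apply (Cert_mono lo f e a b w0 y); try lra; [|exact Cw0].
        assert (H1 : Rabs (f y - f c) <= e * Rabs (y - c)) by (apply Hloc2; rewrite Rabs_right; lra).
        assert (H2 : Rabs (f w0 - f c) <= e * Rabs (w0 - c)) by (apply Hloc2; rewrite Rabs_left1; lra).
        rewrite (Rabs_right (y - c)) in H1 by lra. rewrite (Rabs_left1 (w0 - c)) in H2 by lra.
        replace (f y - f w0) with ((f y - f c) - (f w0 - f c)) by ring.
        pose proof (Rabs_triang (f y - f c) (- (f w0 - f c))). rewrite Rabs_Ropp in H.
        unfold Rminus at 1. nra. }
    destruct Ext as (r & Hr & Hr2).
    assert (HEw : E (Rmin r hi)).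
    { split; [split|]; auto. apply Rmin_glb; lra. apply Rmin_r. }
    assert (Hw : Rmin r hi = hi).
    { apply Hub in HEw. unfold Rmin in *. destruct (Rle_dec r hi); lra. }
    assert (Chi : Cert lo f e a b hi) by (apply Hr2; rewrite Hw; lra).
    destruct Chi as (m & sa & sb & id & H1 & H2 & H3 & H4 & H5).
    destruct m as [|m'].
    - simpl in H5. lra.
    - assert (Hs : sum_f_R0 (fun k => Rabs (f (sb k) - f (sa k))) m' < eps).
      { apply Hacd.
        - intros k Hk. destruct (H1 k ltac:(lia)) as (?&?&?). repeat split; lra.
        - intros k Hk. apply H2. lia.
        - rewrite <- sumN_f_R0.
          destruct (nat_bound id (S m')) as [M HM].
          assert (sumN (fun k => sb k - sa k) (S m') <= sumN (fun k => (fun n => b n - a n) (id k)) (S m')).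
          { apply sumN_le. intros k Hk. destruct (H3 k Hk). simpl. lra. }
          assert (sumN (fun k => (fun n => b n - a n) (id k)) (S m') <= sum_f_R0 (fun n => b n - a n) M).
          { apply (sumN_inj_le (fun n => b n - a n) id); auto. intros n; specialize (Hab n); lra. }
          specialize (Hsum M). lra. }
      rewrite sumN_f_R0 in H5. lra. }
  destruct (Req_dec (f hi) (f lo)) as [|Hne]; auto. exfalso.
  set (z := Rabs (f hi - f lo)).
  assert (Hz : 0 < z) by (apply Rabs_pos_lt; lra).
  specialize (Main (z / (4 * (hi - lo) + 4)) (z / 4) ltac:(apply Rdiv_lt_0_compat; lra) ltac:(lra)).
  assert (z / (4 * (hi - lo) + 4) * (hi - lo) <= z / 4).
  { unfold Rdiv. apply Rle_trans with (z * / (4 * (hi - lo) + 4) * ((hi - lo) + 1)). 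
    apply Rmult_le_compat_l. apply Rmult_le_pos; try lra. left; apply Rinv_0_lt_compat; lra. lra.
    replace (z * / (4 * (hi - lo) + 4) * (hi - lo + 1)) with (z / 4). lra. field. lra. }
  fold z in Main. lra.
Qed.

Lemma sum_abs_lin (x y : nat -> R) v n : (forall k, (k <= n)%nat -> 0 <= y k) ->
  sum_f_R0 (fun k => Rabs (x k - v * y k)) n <=
  sum_f_R0 (fun k => Rabs (x k)) n + Rabs v * sum_f_R0 y n.
Proof.
  induction n; intros Hy; simpl.
  - pose proof (Rabs_triang (x 0%nat) (- (v * y 0%nat))). rewrite Rabs_Ropp, Rabs_mult, (Rabs_right (y 0%nat)) in H by (apply Rle_ge; auto). unfold Rminus; lra.
  - pose proof (Rabs_triang (x (S n)) (- (v * y (S n)))). rewrite Rabs_Ropp, Rabs_mult, (Rabs_right (y (S n))) in H by (apply Rle_ge; auto).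
    assert (IH := IHn (fun k Hk => Hy k ltac:(lia))). unfold Rminus in *; nra.
Qed.

Lemma acI_lin lo hi f v : acI lo hi f -> acI lo hi (fun t => f t - v * t).
Proof.
  intros Hac eps Heps.
  destruct (Hac (eps/2) ltac:(lra)) as (d & Hd & H).
  assert (Hv : 0 < Rabs v + 1) by (pose proof (Rabs_pos v); lra).
  exists (Rmin d (eps / (2 * (Rabs v + 1)))). split.
  { apply Rmin_pos; auto. apply Rdiv_lt_0_compat; lra. }
  intros n a b Hab Hord Hs.
  assert (Hs1 : sum_f_R0 (fun k => b k - a k) n < d) by (pose proof (Rmin_l d (eps / (2 * (Rabs v + 1)))); lra).
  assert (Hs2 : sum_f_R0 (fun k => b k - a k) n < eps / (2 * (Rabs v + 1))) by (pose proof (Rmin_r d (eps / (2 * (Rabs v + 1)))); lra).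
  specialize (H n a b Hab Hord Hs1).
  assert (E : sum_f_R0 (fun k => Rabs (f (b k) - v * b k - (f (a k) - v * a k))) n =
              sum_f_R0 (fun k => Rabs ((f (b k) - f (a k)) - v * (b k - a k))) n).
  { apply sum_eq. intros; f_equal; ring. }
  rewrite E.
  pose proof (sum_abs_lin (fun k => f (b k) - f (a k)) (fun k => b k - a k) v n) as HL.
  simpl in HL. assert (HL' := HL (fun k Hk => ltac:(destruct (Hab k Hk); lra))).
  assert (Rabs v * sum_f_R0 (fun k => b k - a k) n <= Rabs v * (eps / (2 * (Rabs v + 1)))).
  { apply Rmult_le_compat_l. apply Rabs_pos. lra. }
  assert (Rabs v * (eps / (2 * (Rabs v + 1))) < eps / 2).
  { unfold Rdiv. rewrite Rinv_mult. 
    assert (Rabs v * / (Rabs v + 1) < 1).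
    { apply Rmult_lt_reg_r with (Rabs v + 1); auto. rewrite Rmult_assoc, Rinv_l by lra. lra. }
    assert (0 < / (Rabs v + 1)) by (apply Rinv_0_lt_compat; lra).
    replace (Rabs v * (eps * (/ 2 * / (Rabs v + 1)))) with ((Rabs v * / (Rabs v + 1)) * (eps / 2)) by (unfold Rdiv; ring).
    nra. }
  lra.
Qed.

Lemma sum_SS g k : sum_f_R0 g (S (S k)) = g 0%nat + g 1%nat + sum_f_R0 (fun i => g (S (S i))) k.
Proof. induction k. simpl; ring. rewrite tech5, IHk. rewrite tech5. ring. Qed.

Lemma key lo hi v f N : lo <= hi -> acI lo hi f -> negligible N ->
  (forall t, lo < t < hi -> ~ N t -> derivable_pt_lim f t v) ->
  f hi - f lo = v * (hi - lo).
Proof.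
  intros Hlh Hac HN Hd.
  set (g := fun t => f t - v * t).
  assert (g hi = g lo).
  { apply core0; auto. apply acI_lin; auto.
    intros ec Hec. destruct (HN (ec/2) ltac:(lra)) as (a & b & Hab & Hcov & Hs).
    exists (fun n => match n with O => lo - ec/8 | S O => hi - ec/8 | S (S k) => a k end).
    exists (fun n => match n with O => lo + ec/8 | S O => hi + ec/8 | S (S k) => b k end).
    split; [|split].
    - intros [|[|k]]; auto; lra.
    - intros [|[|k]]; [simpl; lra|simpl; lra|]. rewrite sum_SS. specialize (Hs k). simpl. lra.
    - intros t Ht. destruct (Req_dec t lo). left; exists O; lra.
      destruct (Req_dec t hi). left; exists 1%nat; lra.
      destruct (classic (N t)) as [HNt|HNt].
      + left. destruct (Hcov t HNt) as [n Hn]. exists (S (S n)); auto.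
      + right. unfold g. replace 0 with (v - v * 1) by ring.
        apply derivable_pt_lim_minus. apply Hd; auto; lra.
        apply derivable_pt_lim_scal. apply derivable_pt_lim_id. }
  unfold g in H. lra.
Qed.

Lemma sum_nonneg_mono (h : nat -> R) n k : (forall i, 0 <= h i) -> sum_f_R0 h n <= sum_f_R0 h (n + k).
Proof. intros H. induction k. rewrite Nat.add_0_r; lra. rewrite Nat.add_succ_r, tech5. specialize (H (S (n+k))). lra. Qed.

Lemma even_div2_aux m : Nat.even (m + m) = true /\ Nat.div2 (m + m) = m /\
  Nat.even (S (m + m)) = false /\ Nat.div2 (S (m + m)) = m.
Proof.
  induction m. simpl; auto.
  rewrite Nat.add_succ_r. destruct IHm as (H1&H2&H3&H4). rewrite Nat.add_succ_l.
  change (Nat.even (S (S (m + m)))) with (Nat.even (m + m)).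
  change (Nat.div2 (S (S (m + m)))) with (S (Nat.div2 (m + m))).
  change (Nat.even (S (S (S (m + m))))) with (Nat.even (S (m + m))).
  change (Nat.div2 (S (S (S (m + m))))) with (S (Nat.div2 (S (m + m)))).
  rewrite H1, H2, H3, H4. auto.
Qed.

Definition interleave (h1 h2 : nat -> R) n := if Nat.even n then h1 (Nat.div2 n) else h2 (Nat.div2 n).

Lemma sum_interleave h1 h2 m :
  sum_f_R0 (interleave h1 h2) (S (m + m)) = sum_f_R0 h1 m + sum_f_R0 h2 m.
Proof.
  induction m.
  - simpl. unfold interleave. simpl. ring.
  - replace (S (S m + S m)) with (S (S (S (m + m)))) by lia.
    rewrite tech5, tech5, IHm. unfold interleave.
    destruct (even_div2_aux (S m)) as (H1&H2&H3&H4).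
    replace (S (S (m + m))) with (S m + S m)%nat by lia. rewrite H1, H2, H3, H4. simpl. ring.
Qed.

Lemma negligible_union N1 N2 : negligible N1 -> negligible N2 -> negligible (fun t => N1 t \/ N2 t).
Proof.
  intros H1 H2 eps Heps.
  destruct (H1 (eps/2) ltac:(lra)) as (a1 & b1 & Hab1 & Hc1 & Hs1).
  destruct (H2 (eps/2) ltac:(lra)) as (a2 & b2 & Hab2 & Hc2 & Hs2).
  exists (interleave a1 a2), (interleave b1 b2). split; [|split].
  - intros n. unfold interleave. destruct (Nat.even n); auto.
  - intros t [Ht|Ht].
    + destruct (Hc1 t Ht) as [n Hn]. exists (n + n)%nat. unfold interleave.
      destruct (even_div2_aux n) as (E1&E2&_&_). rewrite E1, E2. auto.
    + destruct (Hc2 t Ht) as [n Hn]. exists (S (n + n))%nat. unfold interleave.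
      destruct (even_div2_aux n) as (_&_&E1&E2). rewrite E1, E2. auto.
  - intros n.
    assert (Hnn : forall i, 0 <= interleave b1 b2 i - interleave a1 a2 i).
    { intros i. unfold interleave. destruct (Nat.even i). specialize (Hab1 (Nat.div2 i)); lra. specialize (Hab2 (Nat.div2 i)); lra. }
    pose proof (sum_nonneg_mono _ n (S n) Hnn) as Hm.
    replace (n + S n)%nat with (S (n + n)) in Hm by lia.
    assert (E : sum_f_R0 (fun k => interleave b1 b2 k - interleave a1 a2 k) (S (n + n)) =
      sum_f_R0 (interleave (fun k => b1 k - a1 k) (fun k => b2 k - a2 k)) (S (n + n))).
    { apply sum_eq. intros i _. unfold interleave. destruct (Nat.even i); auto. }
    rewrite E, sum_interleave in Hm. specialize (Hs1 n). specialize (Hs2 n). lra.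
Qed.

Lemma negligible_shift N D : negligible N -> negligible (fun t => N (t + D)).
Proof.
  intros H eps Heps. destruct (H eps Heps) as (a & b & Hab & Hc & Hs).
  exists (fun n => a n - D), (fun n => b n - D). split; [|split].
  - intros n; specialize (Hab n); lra.
  - intros t Ht. destruct (Hc _ Ht) as [n Hn]. exists n; lra.
  - intros n. specialize (Hs n). replace (sum_f_R0 (fun k => b k - D - (a k - D)) n) with (sum_f_R0 (fun k => b k - a k) n); auto.
    apply sum_eq; intros; ring.
Qed.

Lemma negligible_point p : negligible (fun t => t = p).
Proof.
  intros eps Heps.
  exists (fun n => match n with O => p - eps/4 | _ => 0 end), (fun n => match n with O => p + eps/4 | _ => 0 end).
  split; [|split].
  - intros [|n]; lra.
  - intros t ->. exists O. lra.
  - intros n. induction n. simpl; lra. rewrite tech5. simpl. lra.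
Qed.

Lemma negligible_ext N1 N2 : negligible N1 -> (forall t, N2 t -> N1 t) -> negligible N2.
Proof.
  intros H Hi eps Heps. destruct (H eps Heps) as (a & b & H1 & H2 & H3). exists a, b. repeat split; auto.
Qed.

Lemma borel_shift S D : borel S -> borel (fun t => S (t + D)).
Proof.
  induction 1.
  - apply (borel_ext (fun t => a - D < t < b - D)). intros t; split; intros; lra. apply borel_interval.
  - apply borel_compl; auto.
  - apply borel_union; auto.
  - apply (borel_ext (fun t => A (t + D))); auto.
Qed.

Lemma borel_or A B : borel A -> borel B -> borel (fun t => A t \/ B t).
Proof.
  intros HA HB. apply (borel_ext (fun t => exists n : nat, (match n with O => A | _ => B end) t)).
  - intros t; split. intros [[|n] H]; auto. intros [H|H]. exists O; auto. exists 1%nat; auto.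
  - apply borel_union. intros [|n]; auto.
Qed.

Lemma borel_and A B : borel A -> borel B -> borel (fun t => A t /\ B t).
Proof.
  intros HA HB. apply (borel_ext (fun t => ~ ((~ A t) \/ (~ B t)))).
  - intros t; split. intros H. split; apply NNPP; intros Hn; apply H; auto. intros [H1 H2] [H|H]; auto.
  - apply borel_compl, borel_or; apply borel_compl; auto.
Qed.

Lemma borel_const (P : Prop) : borel (fun _ => P).
Proof.
  destruct (classic P) as [HP|HP].
  - apply (borel_ext (fun t => ~ (0 < t < 0))). intros; split; auto; intros; lra. apply borel_compl, borel_interval.
  - apply (borel_ext (fun t => 0 < t < 0)). intros; split; intros; [lra|tauto]. apply borel_interval.
Qed.

Lemma borel_gt A : borel (fun t => A < t).
Proof.
  apply (borel_ext (fun t => exists n : nat, A < t < A + INR n)).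
  - intros t; split. intros [n Hn]; lra.
    intros H. destruct (archimed (t - A)) as [H1 _]. exists (Z.to_nat (up (t - A))).
    rewrite INR_IZR_INZ, Z2Nat.id. lra. apply le_IZR. simpl. lra.
  - apply borel_union. intros n; apply borel_interval.
Qed.

Lemma borel_le A : borel (fun t => t <= A).
Proof.
  apply (borel_ext (fun t => ~ (A < t))). intros t; split; intros; lra. apply borel_compl, borel_gt.
Qed.

Lemma acI_sub lo hi lo' hi' f : acI lo hi f -> lo <= lo' -> hi' <= hi -> acI lo' hi' f.
Proof.
  intros H H1 H2 eps Heps. destruct (H eps Heps) as (d & Hd & Hf). exists d; split; auto.
  intros n a b Hab Ho Hs. apply Hf; auto. intros k Hk; destruct (Hab k Hk); split; lra.
Qed.

Lemma acI_ext lo hi f g : acI lo hi f -> (forall t, f t = g t) -> acI lo hi g.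
Proof.
  intros H E eps Heps. destruct (H eps Heps) as (d & Hd & Hf). exists d; split; auto.
  intros n a b Hab Ho Hs. rewrite <- (sum_eq (fun k => Rabs (f (b k) - f (a k)))). apply Hf; auto.
  intros; rewrite !E; auto.
Qed.

Lemma acI_plus lo hi f g : acI lo hi f -> acI lo hi g -> acI lo hi (fun t => f t + g t).
Proof.
  intros Hf Hg eps Heps. destruct (Hf (eps/2) ltac:(lra)) as (d1 & Hd1 & H1).
  destruct (Hg (eps/2) ltac:(lra)) as (d2 & Hd2 & H2).
  exists (Rmin d1 d2). split. apply Rmin_pos; auto.
  intros n a b Hab Ho Hs.
  pose proof (Rmin_l d1 d2); pose proof (Rmin_r d1 d2).
  specialize (H1 n a b Hab Ho ltac:(lra)). specialize (H2 n a b Hab Ho ltac:(lra)).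
  assert (sum_f_R0 (fun k => Rabs (f (b k) + g (b k) - (f (a k) + g (a k)))) n <=
          sum_f_R0 (fun k => Rabs (f (b k) - f (a k)) + Rabs (g (b k) - g (a k))) n).
  { apply sum_Rle. intros k _. replace (f (b k) + g (b k) - (f (a k) + g (a k))) with ((f (b k) - f (a k)) + (g (b k) - g (a k))) by ring. apply Rabs_triang. }
  pose proof (sum_plus (fun k => Rabs (f (b k) - f (a k))) (fun k => Rabs (g (b k) - g (a k))) n) as SP. simpl in SP. lra.
Qed.

Lemma acI_const lo hi k : acI lo hi (fun _ => k).
Proof.
  intros eps Heps. exists 1. split. lra. intros n a b _ _ _.
  rewrite (sum_eq _ (fun _ => 0)). 2:{ intros; unfold Rminus; rewrite Rplus_opp_r, Rabs_R0; auto. }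
  assert (forall n, sum_f_R0 (fun _ => 0) n = 0). { induction n0; simpl; auto. rewrite IHn0; ring. }
  rewrite H; auto.
Qed.

Lemma acI_comp lo hi lo' hi' f m : acI lo hi f ->
  (forall s t, lo' <= s -> s <= t -> t <= hi' -> m s <= m t /\ m t - m s <= t - s) ->
  (forall t, lo' <= t <= hi' -> lo <= m t <= hi) ->
  acI lo' hi' (fun t => f (m t)).
Proof.
  intros Hf Hm Hr eps Heps. destruct (Hf eps Heps) as (d & Hd & H). exists d; split; auto.
  intros n a b Hab Ho Hs. apply (H n (fun k => m (a k)) (fun k => m (b k))).
  - intros k Hk. destruct (Hab k Hk). destruct (Hm (a k) (b k)); try lra.
    pose proof (Hr (a k) ltac:(lra)); pose proof (Hr (b k) ltac:(lra)). lra.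
  - intros k Hk. destruct (Hab k ltac:(lia)). destruct (Hab (S k) ltac:(lia)).
    specialize (Ho k Hk). destruct (Hm (b k) (a (S k))); lra.
  - eapply Rle_lt_trans; [|apply Hs]. apply sum_Rle. intros k Hk. destruct (Hab k Hk).
    destruct (Hm (a k) (b k)); lra.
Qed.

Lemma acI_lip lo hi f K : 0 <= K ->
  (forall s t, lo <= s <= hi -> lo <= t <= hi -> Rabs (f t - f s) <= K * Rabs (t - s)) ->
  acI lo hi f.
Proof.
  intros HK Hl eps Heps. exists (eps / (K + 1)). split. apply Rdiv_lt_0_compat; lra.
  intros n a b Hab Ho Hs.
  apply Rle_lt_trans with (sum_f_R0 (fun k => (b k - a k) * K) n).
  - apply sum_Rle. intros k Hk. destruct (Hab k Hk). rewrite Rmult_comm, <- (Rabs_right (b k - a k)) by lra. apply Hl; lra.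
  - rewrite <- (scal_sum (fun k => b k - a k) n K).
    apply Rle_lt_trans with (K * (eps / (K + 1))). apply Rmult_le_compat_l; lra.
    unfold Rdiv. replace (K * (eps * / (K + 1))) with (eps * (K / (K + 1))) by (unfold Rdiv; ring).
    assert (K / (K + 1) < 1). { apply Rmult_lt_reg_r with (K + 1). lra. unfold Rdiv. rewrite Rmult_assoc, Rinv_l by lra. lra. }
    nra.
Qed.

From Coquelicot Require Import Coquelicot.

Lemma dpl_local f g t l eta : 0 < eta -> (forall s, Rabs (s - t) < eta -> f s = g s) ->
  derivable_pt_lim g t l -> derivable_pt_lim f t l.
Proof.
  intros He E H eps Heps. destruct (H eps Heps) as (d & Hd).
  assert (Hm : 0 < Rmin d eta) by (apply Rmin_pos; auto; apply cond_pos).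
  exists (mkposreal _ Hm). intros h Hh Hlt. simpl in Hlt.
  pose proof (Rmin_l d eta); pose proof (Rmin_r d eta).
  rewrite !E. apply Hd; auto; lra.
  unfold Rminus; rewrite Rplus_opp_r, Rabs_R0; auto.
  replace (t + h - t) with h by ring; lra.
Qed.

Lemma dpl_shift f t D l : derivable_pt_lim f (t + D) l -> derivable_pt_lim (fun s => f (s + D)) t l.
Proof.
  intros H eps Heps. destruct (H eps Heps) as (d & Hd). exists d. intros h Hh Hlt.
  replace (t + h + D) with (t + D + h) by ring. apply Hd; auto.
Qed.

Definition flowx (al p : R * R) (s : R) := fst p + (fst al + snd al) * s.
Definition flowy (al p : R * R) (s : R) :=
  snd p + (fst al - snd al) * (fst p * s + (fst al + snd al) * (s * s) / 2).
Definition flow (al : R * R) (s : R) (p : R * R) := (flowx al p s, flowy al p s).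

Lemma dpl_flowy al p t :
  derivable_pt_lim (fun s => flowy al p s) t (fst al * flowx al p t + snd al * - flowx al p t).
Proof. apply is_derive_Reals. unfold flowy, flowx. auto_derive. auto. field. Qed.

Lemma dpl_flowx al p t : derivable_pt_lim (fun s => flowx al p s) t (fst al * 1 + snd al * 1).
Proof. apply is_derive_Reals. unfold flowx. auto_derive. auto. ring. Qed.

Lemma quad_lip k0 k1 k2 M : 0 <= M -> forall s t, 0 <= s <= M -> 0 <= t <= M ->
  Rabs ((k0 + k1 * t + k2 * (t * t)) - (k0 + k1 * s + k2 * (s * s))) <=
  (Rabs k1 + 2 * Rabs k2 * M) * Rabs (t - s).
Proof.
  intros HM s t Hs Ht.
  replace ((k0 + k1 * t + k2 * (t * t)) - (k0 + k1 * s + k2 * (s * s))) with ((k1 + k2 * (t + s)) * (t - s)) by ring.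
  rewrite Rabs_mult. apply Rmult_le_compat_r. apply Rabs_pos.
  eapply Rle_trans. apply Rabs_triang. rewrite Rabs_mult.
  assert (Rabs (t + s) <= 2 * M) by (rewrite Rabs_right; lra).
  pose proof (Rabs_pos k2). nra.
Qed.

Lemma acI_quad k0 k1 k2 M f : 0 <= M -> (forall s, f s = k0 + k1 * s + k2 * (s * s)) -> acI 0 M f.
Proof.
  intros HM E. apply acI_lip with (K := Rabs k1 + 2 * Rabs k2 * M).
  pose proof (Rabs_pos k1); pose proof (Rabs_pos k2); nra.
  intros s t Hs Ht. rewrite !E. apply quad_lip; auto.
Qed.

Lemma acI_flowx al p M : 0 <= M -> acI 0 M (fun s => flowx al p s).
Proof. intros HM. apply (acI_quad (fst p) (fst al + snd al) 0 M); auto. intros; unfold flowx; ring. Qed.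

Lemma acI_flowy al p M : 0 <= M -> acI 0 M (fun s => flowy al p s).
Proof. intros HM. apply (acI_quad (snd p) ((fst al - snd al) * fst p) ((fst al - snd al) * (fst al + snd al) / 2) M); auto.
  intros; unfold flowy; field. Qed.

Definition clA (A t : R) := Rmin (Rmax t 0) A.

Lemma clA_props A : 0 <= A ->
  (forall s t, s <= t -> clA A s <= clA A t /\ clA A t - clA A s <= t - s) /\
  (forall t, 0 <= clA A t <= A).
Proof.
  intros HA. unfold clA, Rmin, Rmax. split.
  - intros s t Hst. destruct (Rle_dec s 0), (Rle_dec t 0); try destruct (Rle_dec 0 A);
    try destruct (Rle_dec s A); try destruct (Rle_dec t A); try destruct (Rle_dec 0 A); lra.
  - intros t. destruct (Rle_dec t 0); destruct (Rle_dec _ A); lra.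
Qed.

Lemma clA_id A t : 0 <= t <= A -> clA A t = t.
Proof. intros H. unfold clA, Rmin, Rmax. destruct (Rle_dec t 0); destruct (Rle_dec _ A); lra. Qed.
Lemma clA_lo A t : 0 <= A -> t <= 0 -> clA A t = 0.
Proof. intros H H'. unfold clA, Rmin, Rmax. destruct (Rle_dec t 0); destruct (Rle_dec _ A); lra. Qed.
Lemma clA_hi A t : 0 <= A -> A <= t -> clA A t = A.
Proof. intros H H'. unfold clA, Rmin, Rmax. destruct (Rle_dec t 0); destruct (Rle_dec _ A); lra. Qed.

Lemma acI_clamp_comp f A lo hi : 0 <= A -> acI 0 A f -> forall C, acI lo hi (fun t => f (clA A (t - C))).
Proof.
  intros HA Hf C. destruct (clA_props A HA) as [Hm Hr].
  apply (acI_comp 0 A lo hi f (fun t => clA A (t - C))); auto.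
  intros s t _ Hst _. destruct (Hm (s - C) (t - C)); lra.
Qed.

Lemma admissible_unfold T g u : admissible T g u ->
  0 <= T /\ measurable_fun (fun t => fst (u t)) /\ measurable_fun (fun t => snd (u t)) /\
  (exists N, negligible N /\ forall t, 0 < t < T -> ~ N t -> Rabs (fst (u t)) <= 1 /\ Rabs (snd (u t)) <= 1) /\
  acI 0 T (fun t => fst (g t)) /\ acI 0 T (fun t => snd (g t)) /\
  (exists N, negligible N /\ forall t, 0 < t < T -> ~ N t ->
    derivable_pt_lim (fun s => fst (g s)) t (fst (u t) * 1 + snd (u t) * 1) /\
    derivable_pt_lim (fun s => snd (g s)) t (fst (u t) * fst (g t) + snd (u t) * - fst (g t))).
Proof.
  intros (H1 & H2 & H3 & H4 & [H5 H6] & H7). repeat split; auto.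
Qed.

Lemma competitor T gamma u t4 A B al be :
  admissible T gamma u -> 0 <= A -> 0 <= B -> A + B < t4 -> t4 <= T ->
  Rabs (fst al) <= 1 -> Rabs (snd al) <= 1 -> Rabs (fst be) <= 1 -> Rabs (snd be) <= 1 ->
  flow be B (flow al A (gamma 0)) = gamma t4 -> ~ time_minimizer T gamma.
Proof.
  intros Hadm HA HB HAB Ht4 Ha1 Ha2 Hb1 Hb2 Hend [_ Hmin].
  destruct (admissible_unfold _ _ _ Hadm) as (HT & Hm1 & Hm2 & (Nu & HNu & Hu) & Hac1 & Hac2 & (Nd & HNd & Hd)).
  set (p0 := gamma 0). set (p1 := flow al A p0). set (D := t4 - (A + B)).
  set (Tp := T - D).
  set (mm := fun t => Rmax t (A + B) + D).
  set (Gx := fun t => flowx al p0 (clA A (t - 0)) + (flowx be p1 (clA B (t - A)) - fst p1)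
                     + (fst (gamma (mm t)) + - fst (gamma t4))).
  set (Gy := fun t => flowy al p0 (clA A (t - 0)) + (flowy be p1 (clA B (t - A)) - snd p1)
                     + (snd (gamma (mm t)) + - snd (gamma t4))).
  set (G := fun t => (Gx t, Gy t)).
  set (U := fun t => if Rle_dec t A then al else if Rle_dec t (A + B) then be else u (t + D)).
  assert (HE1 : fst p1 = flowx al p0 A) by reflexivity.
  assert (HE2 : snd p1 = flowy al p0 A) by reflexivity.
  assert (Hend1 : flowx be p1 B = fst (gamma t4)) by (rewrite <- Hend; reflexivity).
  assert (Hend2 : flowy be p1 B = snd (gamma t4)) by (rewrite <- Hend; reflexivity).
  assert (HD : 0 < D) by (unfold D; lra).
  assert (Hmm : forall t, A + B <= t -> mm t = t + D).
  { intros t Ht. unfold mm, Rmax. destruct (Rle_dec t (A + B)); lra. }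
  assert (Hmm2 : forall t, t <= A + B -> mm t = t4).
  { intros t Ht. unfold mm, Rmax. destruct (Rle_dec t (A + B)); unfold D; lra. }
  apply (Hmin Tp G U).
  -
    split; [unfold Tp, D; lra|].
    assert (Hmeas : forall (f : R * R -> R), measurable_fun (fun t => f (u t)) -> measurable_fun (fun t => f (U t))).
    { intros f Hf r. apply (borel_ext (fun t => (t <= A /\ f al < r) \/ ((~ t <= A) /\ ((t <= A + B /\ f be < r) \/ ((~ t <= A + B) /\ f (u (t + D)) < r))))).
      - intros t. unfold U. destruct (Rle_dec t A); destruct (Rle_dec t (A + B)); tauto.
      - apply borel_or. apply borel_and. apply borel_le. apply borel_const.
        apply borel_and. apply borel_compl, borel_le. apply borel_or.
        apply borel_and. apply borel_le. apply borel_const.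
        apply borel_and. apply borel_compl, borel_le. apply (borel_shift (fun t => f (u t) < r)). apply Hf. }
    split; [apply (Hmeas fst Hm1)|]. split; [apply (Hmeas snd Hm2)|].
    split.
    { exists (fun t => Nu (t + D)). split. apply negligible_shift; auto.
      intros t Ht HN. unfold U. destruct (Rle_dec t A); auto. destruct (Rle_dec t (A + B)); auto.
      apply Hu; auto. unfold Tp, D in *; lra. }
    split.
    { assert (Hg : forall (f : R -> R), acI 0 T f -> acI 0 Tp (fun t => f (mm t))).
      { intros f Hf. apply (acI_comp 0 T 0 Tp f mm Hf).
        - intros s t _ Hst _. unfold mm, Rmax. destruct (Rle_dec s (A + B)), (Rle_dec t (A + B)); lra.
        - intros t Ht. unfold mm, Rmax, Tp, D in *. destruct (Rle_dec t (A + B)); lra. }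
      split.
      - change (acI 0 Tp Gx).
        apply (acI_plus 0 Tp (fun t => flowx al p0 (clA A (t - 0)) + (flowx be p1 (clA B (t - A)) - fst p1)) (fun t => fst (gamma (mm t)) + - fst (gamma t4))).
        + apply (acI_plus 0 Tp (fun t => flowx al p0 (clA A (t - 0))) (fun t => flowx be p1 (clA B (t - A)) - fst p1)).
          * apply (acI_clamp_comp (fun s => flowx al p0 s)); auto. apply acI_flowx; auto.
          * apply (acI_ext _ _ (fun t => flowx be p1 (clA B (t - A)) + - fst p1)).
            apply (acI_plus 0 Tp (fun t => flowx be p1 (clA B (t - A))) (fun _ => - fst p1)).
            apply (acI_clamp_comp (fun s => flowx be p1 s)); auto. apply acI_flowx; auto. apply acI_const.
            intros; ring.
        + apply (acI_plus 0 Tp (fun t => fst (gamma (mm t))) (fun _ => - fst (gamma t4))).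
          apply (Hg (fun t => fst (gamma t))); auto. apply acI_const.
      - change (acI 0 Tp Gy).
        apply (acI_plus 0 Tp (fun t => flowy al p0 (clA A (t - 0)) + (flowy be p1 (clA B (t - A)) - snd p1)) (fun t => snd (gamma (mm t)) + - snd (gamma t4))).
        + apply (acI_plus 0 Tp (fun t => flowy al p0 (clA A (t - 0))) (fun t => flowy be p1 (clA B (t - A)) - snd p1)).
          * apply (acI_clamp_comp (fun s => flowy al p0 s)); auto. apply acI_flowy; auto.
          * apply (acI_ext _ _ (fun t => flowy be p1 (clA B (t - A)) + - snd p1)).
            apply (acI_plus 0 Tp (fun t => flowy be p1 (clA B (t - A))) (fun _ => - snd p1)).
            apply (acI_clamp_comp (fun s => flowy be p1 s)); auto. apply acI_flowy; auto. apply acI_const.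
            intros; ring.
        + apply (acI_plus 0 Tp (fun t => snd (gamma (mm t))) (fun _ => - snd (gamma t4))).
          apply (Hg (fun t => snd (gamma t))); auto. apply acI_const. }
    exists (fun t => Nd (t + D) \/ (t = A \/ t = A + B)). split.
    { apply negligible_union. apply negligible_shift; auto. apply negligible_union; apply negligible_point. }
    intros t Ht HN. unfold G; simpl.
    destruct (Rlt_dec t A) as [HtA|HtA].
    +
      assert (EU : U t = al) by (unfold U; destruct (Rle_dec t A); [auto|lra]).
      rewrite EU.
      assert (Eta : 0 < Rmin t (A - t)) by (apply Rmin_pos; lra).
      assert (Loc : forall s, Rabs (s - t) < Rmin t (A - t) -> 0 < s < A).
      { intros s Hs. pose proof (Rmin_l t (A - t)); pose proof (Rmin_r t (A - t)).
        apply Rabs_def2 in Hs. lra. }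
      assert (EGx : forall s, 0 < s < A -> Gx s = flowx al p0 s).
      { intros s Hs. unfold Gx. rewrite clA_id by lra. rewrite (clA_lo B) by lra.
        rewrite Hmm2 by lra. replace (flowx be p1 0) with (fst p1) by (unfold flowx; ring). replace (s - 0) with s by ring. ring. }
      assert (EGy : forall s, 0 < s < A -> Gy s = flowy al p0 s).
      { intros s Hs. unfold Gy. rewrite clA_id by lra. rewrite (clA_lo B) by lra.
        rewrite Hmm2 by lra. replace (flowy be p1 0) with (snd p1) by (unfold flowy; field). replace (s - 0) with s by ring. ring. }
      split.
      * apply (dpl_local _ _ _ _ _ Eta (fun s Hs => EGx s (Loc s Hs))). apply dpl_flowx.
      * rewrite (EGx t) by lra. apply (dpl_local _ _ _ _ _ Eta (fun s Hs => EGy s (Loc s Hs))). apply dpl_flowy.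
    + destruct (Rlt_dec t (A + B)) as [HtB|HtB].
      * assert (HtA' : A < t) by (destruct (Req_dec t A); [exfalso; apply HN; auto|lra]).
        assert (EU : U t = be) by (unfold U; destruct (Rle_dec t A); [lra|]; destruct (Rle_dec t (A + B)); [auto|lra]).
        rewrite EU.
        assert (Eta : 0 < Rmin (t - A) (A + B - t)) by (apply Rmin_pos; lra).
        assert (Loc : forall s, Rabs (s - t) < Rmin (t - A) (A + B - t) -> A < s < A + B).
        { intros s Hs. pose proof (Rmin_l (t - A) (A + B - t)); pose proof (Rmin_r (t - A) (A + B - t)).
          apply Rabs_def2 in Hs. lra. }
        assert (EGx : forall s, A < s < A + B -> Gx s = flowx be p1 (s + - A)).
        { intros s Hs. unfold Gx. rewrite (clA_hi A) by lra. rewrite (clA_id B) by lra.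
          rewrite Hmm2 by lra. rewrite HE1. replace (s + - A) with (s - A) by ring. ring. }
        assert (EGy : forall s, A < s < A + B -> Gy s = flowy be p1 (s + - A)).
        { intros s Hs. unfold Gy. rewrite (clA_hi A) by lra. rewrite (clA_id B) by lra.
          rewrite Hmm2 by lra. rewrite HE2. replace (s + - A) with (s - A) by ring. ring. }
        split.
        -- apply (dpl_local _ _ _ _ _ Eta (fun s Hs => EGx s (Loc s Hs))).
           apply (dpl_shift (fun s => flowx be p1 s)). apply dpl_flowx.
        -- rewrite (EGx t) by lra. apply (dpl_local _ _ _ _ _ Eta (fun s Hs => EGy s (Loc s Hs))).
           apply (dpl_shift (fun s => flowy be p1 s)). apply dpl_flowy.
      * assert (HtB' : A + B < t) by (destruct (Req_dec t (A + B)); [exfalso; apply HN; auto|lra]).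
        assert (EU : U t = u (t + D)) by (unfold U; destruct (Rle_dec t A); [lra|]; destruct (Rle_dec t (A + B)); [lra|auto]).
        rewrite EU.
        assert (Eta : 0 < t - (A + B)) by lra.
        assert (Loc : forall s, Rabs (s - t) < t - (A + B) -> A + B < s).
        { intros s Hs. apply Rabs_def2 in Hs. lra. }
        assert (EGx : forall s, A + B < s -> Gx s = fst (gamma (s + D))).
        { intros s Hs. unfold Gx. rewrite (clA_hi A) by lra. rewrite (clA_hi B) by lra.
          rewrite Hmm by lra. rewrite HE1, Hend1. ring. }
        assert (EGy : forall s, A + B < s -> Gy s = snd (gamma (s + D))).
        { intros s Hs. unfold Gy. rewrite (clA_hi A) by lra. rewrite (clA_hi B) by lra.
          rewrite Hmm by lra. rewrite HE2, Hend2. ring. }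
        assert (Ht' : 0 < t + D < T) by (unfold Tp, D in *; lra).
        destruct (Hd (t + D) Ht' (fun H => HN (or_introl H))) as [Hd1 Hd2].
        split.
        -- apply (dpl_local _ _ _ _ _ Eta (fun s Hs => EGx s (Loc s Hs))).
           apply (dpl_shift (fun s => fst (gamma s))). auto.
        -- rewrite (EGx t) by lra. apply (dpl_local _ _ _ _ _ Eta (fun s Hs => EGy s (Loc s Hs))).
           apply (dpl_shift (fun s => snd (gamma s))). auto.
  -
    unfold G, Gx, Gy. replace (0 - 0) with 0 by ring. rewrite (clA_lo A 0) by lra. rewrite (clA_lo B) by lra.
    rewrite Hmm2 by lra. rewrite (surjective_pairing (gamma 0)). unfold flowx, flowy, p0. f_equal; field.
  -
    unfold G, Gx, Gy. rewrite (clA_hi A) by (unfold Tp, D; lra). rewrite (clA_hi B) by (unfold Tp, D; lra).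
    rewrite Hmm by (unfold Tp, D; lra). replace (Tp + D) with T by (unfold Tp; ring).
    rewrite HE1, HE2, Hend1, Hend2. destruct (gamma T) as [xT yT]. simpl. f_equal; ring.
  - unfold Tp; lra.
Qed.

Lemma ac_cont lo hi f t : acI lo hi f -> lo < t < hi -> continuity_pt f t.
Proof.
  intros Hf Ht. unfold continuity_pt, continue_in, limit1_in, limit_in. simpl. unfold R_dist.
  intros eps Heps. destruct (Hf eps Heps) as (d & Hd & H).
  exists (Rmin d (Rmin (t - lo) (hi - t))). split.
  { apply Rmin_pos; auto. apply Rmin_pos; lra. }
  intros x [_ Hx]. pose proof (Rmin_l d (Rmin (t - lo) (hi - t))). pose proof (Rmin_r d (Rmin (t - lo) (hi - t))).
  pose proof (Rmin_l (t - lo) (hi - t)). pose proof (Rmin_r (t - lo) (hi - t)).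
  apply Rabs_def2 in Hx.
  destruct (Rle_dec t x).
  - specialize (H O (fun _ => t) (fun _ => x)). simpl in H. apply H.
    + intros k _; lra.
    + intros k Hk; lia.
    + lra.
  - specialize (H O (fun _ => x) (fun _ => t)). simpl in H. rewrite Rabs_minus_sym. apply H.
    + intros k _; lra.
    + intros k Hk; lia.
    + lra.
Qed.

Definition clp (s t x : R) := (s + t + Rabs (x - s) - Rabs (x - t)) / 2.

Lemma clp_props s t : s <= t -> (forall x, s <= clp s t x <= t) /\ clp s t s = s /\ clp s t t = t /\
  (forall x, s <= x <= t -> clp s t x = x).
Proof.
  intros Hst. unfold clp. repeat split; intros; unfold Rabs;
  repeat destruct Rcase_abs; lra.
Qed.

Lemma clp_cont s t : continuity (clp s t).
Proof.
  intros x. unfold continuity_pt, continue_in, limit1_in, limit_in. simpl. unfold R_dist.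
  intros eps Heps. exists eps. split; auto. intros y [_ Hy].
  unfold clp. apply Rle_lt_trans with (Rabs (y - x)); auto.
  unfold Rabs at 2 3 4 5; repeat destruct Rcase_abs; unfold Rabs; repeat destruct Rcase_abs; lra.
Qed.

Lemma sign_const f a b : (forall t, a < t < b -> continuity_pt f t) -> (forall t, a < t < b -> f t <> 0) ->
  forall s t, a < s < b -> a < t < b -> 0 < f s * f t.
Proof.
  intros Hc Hnz.
  assert (Main : forall s t, a < s < b -> a < t < b -> s <= t -> 0 < f s * f t).
  { intros s t Hs Ht Hst.
    destruct (clp_props s t Hst) as (Hr & E1 & E2 & _).
    assert (Hg : continuity (fun x => f (clp s t x))).
    { intros x. apply (continuity_pt_comp (clp s t) f). apply clp_cont. apply Hc. specialize (Hr x). lra. }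
    pose proof (Hnz s Hs); pose proof (Hnz t Ht).
    destruct (Rlt_dec 0 (f s * f t)); auto. exfalso.
    destruct (Req_dec s t). subst. assert (0 < f t * f t) by (apply Rsqr_pos_lt; auto). lra.
    assert (Hst' : s < t) by lra.
    destruct (Rlt_dec (f s) 0).
    - assert (0 < f t) by (destruct (Rlt_dec 0 (f t)); auto; destruct (Req_dec (f t) 0); [tauto|nra]).
      destruct (IVT (fun x => f (clp s t x)) s t Hg Hst') as (z & Hz1 & Hz2); try rewrite E1; try rewrite E2; auto.
      apply (Hnz (clp s t z)). specialize (Hr z); lra. auto.
    - assert (0 < f s) by (destruct (Req_dec (f s) 0); [tauto|lra]).
      assert (f t < 0) by (destruct (Rlt_dec (f t) 0); auto; destruct (Req_dec (f t) 0); [tauto|nra]).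
      assert (Hg' : continuity (fun x => - f (clp s t x))) by (apply continuity_opp; auto).
      destruct (IVT (fun x => - f (clp s t x)) s t Hg' Hst') as (z & Hz1 & Hz2); try rewrite E1; try rewrite E2; try lra.
      apply (Hnz (clp s t z)). specialize (Hr z); lra. lra. }
  intros s t Hs Ht. destruct (Rle_dec s t). auto. rewrite Rmult_comm. apply Main; auto; lra.
Qed.

Lemma lin_left al be d : 0 < d -> (forall tau, 0 < tau < d -> 0 < al + be * tau) -> 0 <= al.
Proof.
  intros Hd H. destruct (Rle_dec 0 al); auto. exfalso.
  set (tau := Rmin (d / 2) (- al / (2 * (Rabs be + 1)))).
  assert (Hb : 0 < Rabs be + 1) by (pose proof (Rabs_pos be); lra).
  assert (Ht : 0 < tau) by (apply Rmin_pos; [lra|]; apply Rdiv_lt_0_compat; lra).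
  assert (Ht2 : tau <= - al / (2 * (Rabs be + 1))) by apply Rmin_r.
  assert (Ht3 : tau <= d/2) by apply Rmin_l.
  specialize (H tau ltac:(lra)).
  assert (be * tau <= Rabs be * tau) by (apply Rmult_le_compat_r; [lra|apply Rle_abs]).
  assert ((Rabs be + 1) * tau <= - al / 2).
  { apply Rmult_le_compat_l with (r := Rabs be + 1) in Ht2; [|lra].
    replace ((Rabs be + 1) * (- al / (2 * (Rabs be + 1)))) with (- al / 2) in Ht2 by (field; lra). auto. }
  lra.
Qed.

Lemma lin_right al be d : 0 < d -> (forall tau, 0 < tau < d -> 0 < al + be * tau) -> 0 <= al + be * d.
Proof.
  intros Hd H. apply (lin_left (al + be * d) (- be) d Hd). intros tau Ht.
  replace (al + be * d + - be * tau) with (al + be * (d - tau)) by ring. apply H; lra.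
Qed.

Lemma u_sign u1 u2 p1 p2 s1 s2 : Rabs u1 <= 1 -> Rabs u2 <= 1 -> (s1 = 1 \/ s1 = -1) -> (s2 = 1 \/ s2 = -1) ->
  0 < s1 * p1 -> 0 < s2 * p2 -> u1 * p1 + u2 * p2 = Rabs p1 + Rabs p2 -> u1 = s1 /\ u2 = s2.
Proof.
  intros H1 H2 Hs1 Hs2 Hp1 Hp2 E. apply Rabs_le_between in H1. apply Rabs_le_between in H2.
  revert E. unfold Rabs. destruct (Rcase_abs p1), (Rcase_abs p2); destruct Hs1, Hs2; subst; intros; split; nra.
Qed.

Lemma phi1_eq lam gamma t : phi1 lam gamma t = fst (lam t) * 1 + snd (lam t) * fst (gamma t).
Proof. reflexivity. Qed.
Lemma phi2_eq lam gamma t : phi2 lam gamma t = fst (lam t) * 1 + snd (lam t) * - fst (gamma t).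
Proof. reflexivity. Qed.

Section Struct.
Variables (T : R) (gamma lam u : R -> R * R) (c : R) (N : R -> Prop).
Hypotheses (HT : 0 <= T)
  (Hacx : acI 0 T (fun t => fst (gamma t)))
  (Hacy : acI 0 T (fun t => snd (gamma t)))
  (Hacl1 : acI 0 T (fun t => fst (lam t)))
  (Hacl2 : acI 0 T (fun t => snd (lam t)))
  (HN : negligible N)
  (Hbd : forall t, 0 < t < T -> ~ N t -> Rabs (fst (u t)) <= 1 /\ Rabs (snd (u t)) <= 1)
  (Hdg : forall t, 0 < t < T -> ~ N t ->
    derivable_pt_lim (fun s => fst (gamma s)) t (fst (u t) * 1 + snd (u t) * 1) /\
    derivable_pt_lim (fun s => snd (gamma s)) t (fst (u t) * fst (gamma t) + snd (u t) * - fst (gamma t)))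
  (Hdl : forall t, 0 < t < T -> ~ N t ->
    derivable_pt_lim (fun s => fst (lam s)) t (- (fst (u t) * c - snd (u t) * c)))
  (Hl2 : forall t, 0 <= t <= T -> snd (lam t) = c)
  (Hham : forall t, 0 < t < T -> ~ N t ->
    fst (u t) * phi1 lam gamma t + snd (u t) * phi2 lam gamma t =
    Rabs (phi1 lam gamma t) + Rabs (phi2 lam gamma t)).

Lemma phi_cont t : 0 < t < T -> continuity_pt (phi1 lam gamma) t /\ continuity_pt (phi2 lam gamma) t.
Proof.
  intros Ht.
  assert (C1 := ac_cont _ _ _ t Hacl1 Ht). assert (C2 := ac_cont _ _ _ t Hacl2 Ht).
  assert (C3 := ac_cont _ _ _ t Hacx Ht).
  split.
  - apply (continuity_pt_ext (fun t => fst (lam t) * 1 + snd (lam t) * fst (gamma t))). intros; reflexivity.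
    apply continuity_pt_plus. apply continuity_pt_mult; auto. apply continuity_pt_const; intros ??; auto.
    apply continuity_pt_mult; auto.
  - apply (continuity_pt_ext (fun t => fst (lam t) * 1 + snd (lam t) * - fst (gamma t))). intros; reflexivity.
    apply continuity_pt_plus. apply continuity_pt_mult; auto. apply continuity_pt_const; intros ??; auto.
    apply continuity_pt_mult; auto. apply continuity_pt_opp; auto.
Qed.

Definition sgnR (x : R) := if Rlt_dec 0 x then 1 else -1.

Lemma sgnR_pm x : sgnR x = 1 \/ sgnR x = -1.
Proof. unfold sgnR; destruct (Rlt_dec 0 x); auto. Qed.

Lemma arc_signs a b : 0 <= a -> a < b -> b <= T -> regular_on lam gamma a b ->
  forall t, a < t < b -> 0 < sgnR (phi1 lam gamma ((a+b)/2)) * phi1 lam gamma t /\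
                        0 < sgnR (phi2 lam gamma ((a+b)/2)) * phi2 lam gamma t.
Proof.
  intros Ha Hab Hb Hreg t Ht.
  assert (Hm : a < (a + b) / 2 < b) by lra.
  assert (Hc : forall s, a < s < b -> continuity_pt (phi1 lam gamma) s /\ continuity_pt (phi2 lam gamma) s)
    by (intros; apply phi_cont; lra).
  pose proof (sign_const (phi1 lam gamma) a b (fun s Hs => proj1 (Hc s Hs)) (fun s Hs => proj1 (Hreg s Hs)) _ _ Hm Ht).
  pose proof (sign_const (phi2 lam gamma) a b (fun s Hs => proj2 (Hc s Hs)) (fun s Hs => proj2 (Hreg s Hs)) _ _ Hm Ht).
  pose proof (Hreg _ Hm) as [N1 N2].
  unfold sgnR. split.
  - destruct (Rlt_dec 0 (phi1 lam gamma ((a + b) / 2))); nra.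
  - destruct (Rlt_dec 0 (phi2 lam gamma ((a + b) / 2))); nra.
Qed.

Lemma arc_formulas a b s1 s2 : 0 <= a -> a < b -> b <= T -> (s1 = 1 \/ s1 = -1) -> (s2 = 1 \/ s2 = -1) ->
  (forall t, a < t < b -> 0 < s1 * phi1 lam gamma t /\ 0 < s2 * phi2 lam gamma t) ->
  forall t, a <= t <= b ->
    fst (gamma t) = fst (gamma a) + (s1 + s2) * (t - a) /\
    snd (gamma t) = snd (gamma a) + (s1 - s2) * fst (gamma a) * (t - a) /\
    fst (lam t) = fst (lam a) - c * (s1 - s2) * (t - a).
Proof.
  intros Ha Hab Hb Hs1 Hs2 Hsg.
  assert (Hu : forall t, a < t < b -> ~ N t -> fst (u t) = s1 /\ snd (u t) = s2).
  { intros t Ht HNt. assert (Ht' : 0 < t < T) by lra. destruct (Hbd t Ht' HNt).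
    destruct (Hsg t Ht). eapply u_sign; eauto. }
  assert (Fx : forall t, a <= t <= b -> fst (gamma t) = fst (gamma a) + (s1 + s2) * (t - a)).
  { intros t Ht. enough (fst (gamma t) - fst (gamma a) = (s1 + s2) * (t - a)) by lra.
    apply (key a t (s1 + s2) (fun s => fst (gamma s)) N); try lra; auto.
    apply (acI_sub 0 T); auto; lra.
    intros tau Htau HNt. destruct (Hu tau ltac:(lra) HNt) as [E1 E2].
    destruct (Hdg tau ltac:(lra) HNt) as [D1 _]. rewrite E1, E2 in D1. replace (s1 + s2) with (s1 * 1 + s2 * 1) by ring. auto. }
  intros t Ht. split; [apply Fx; auto|split].
  - enough (snd (gamma t) - snd (gamma a) = (s1 - s2) * fst (gamma a) * (t - a)) by lra.
    apply (key a t ((s1 - s2) * fst (gamma a)) (fun s => snd (gamma s)) N); try lra; auto.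
    apply (acI_sub 0 T); auto; lra.
    intros tau Htau HNt. destruct (Hu tau ltac:(lra) HNt) as [E1 E2].
    destruct (Hdg tau ltac:(lra) HNt) as [_ D2]. rewrite E1, E2, (Fx tau) in D2 by lra.
    replace ((s1 - s2) * fst (gamma a)) with (s1 * (fst (gamma a) + (s1 + s2) * (tau - a)) + s2 * - (fst (gamma a) + (s1 + s2) * (tau - a))); auto.
    destruct Hs1, Hs2; subst; ring.
  - enough (fst (lam t) - fst (lam a) = - c * (s1 - s2) * (t - a)) by lra.
    apply (key a t (- c * (s1 - s2)) (fun s => fst (lam s)) N); try lra; auto.
    apply (acI_sub 0 T); auto; lra.
    intros tau Htau HNt. destruct (Hu tau ltac:(lra) HNt) as [E1 E2].
    pose proof (Hdl tau ltac:(lra) HNt) as D. rewrite E1, E2 in D.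
    replace (- c * (s1 - s2)) with (- (s1 * c - s2 * c)) by ring. auto.
Qed.


Lemma arc_pack a b : 0 <= a -> a < b -> b <= T -> regular_on lam gamma a b ->
  exists s1 s2, (s1 = 1 \/ s1 = -1) /\ (s2 = 1 \/ s2 = -1) /\
  fst (gamma b) = fst (gamma a) + (s1 + s2) * (b - a) /\
  snd (gamma b) = snd (gamma a) + (s1 - s2) * fst (gamma a) * (b - a) /\
  phi1 lam gamma b = phi1 lam gamma a + 2 * s2 * (c * (b - a)) /\
  phi2 lam gamma b = phi2 lam gamma a - 2 * s1 * (c * (b - a)) /\
  0 <= s1 * phi1 lam gamma a /\ 0 <= s1 * phi1 lam gamma b /\ 0 < s1 * (phi1 lam gamma a + phi1 lam gamma b) /\
  0 <= s2 * phi2 lam gamma a /\ 0 <= s2 * phi2 lam gamma b /\ 0 < s2 * (phi2 lam gamma a + phi2 lam gamma b).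
Proof.
  intros Ha Hab Hb Hreg.
  set (s1 := sgnR (phi1 lam gamma ((a + b) / 2))). set (s2 := sgnR (phi2 lam gamma ((a + b) / 2))).
  pose proof (arc_signs a b Ha Hab Hb Hreg) as Hsg. fold s1 s2 in Hsg.
  pose proof (arc_formulas a b s1 s2 Ha Hab Hb (sgnR_pm _) (sgnR_pm _) Hsg) as F.
  assert (P1 : forall t, a <= t <= b -> phi1 lam gamma t = phi1 lam gamma a + 2 * s2 * (c * (t - a))).
  { intros t Ht. rewrite !phi1_eq, !Hl2 by lra. destruct (F t Ht) as (F1 & _ & F3). rewrite F1, F3. ring. }
  assert (P2 : forall t, a <= t <= b -> phi2 lam gamma t = phi2 lam gamma a - 2 * s1 * (c * (t - a))).
  { intros t Ht. rewrite !phi2_eq, !Hl2 by lra. destruct (F t Ht) as (F1 & _ & F3). rewrite F1, F3. ring. }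
  assert (L1 : forall tau, 0 < tau < b - a -> 0 < s1 * phi1 lam gamma a + (s1 * 2 * s2 * c) * tau).
  { intros tau Ht. destruct (Hsg (a + tau) ltac:(lra)) as [H _]. rewrite P1 in H by lra.
    replace (a + tau - a) with tau in H by ring. nra. }
  assert (L2 : forall tau, 0 < tau < b - a -> 0 < s2 * phi2 lam gamma a + (- s2 * 2 * s1 * c) * tau).
  { intros tau Ht. destruct (Hsg (a + tau) ltac:(lra)) as [_ H]. rewrite P2 in H by lra.
    replace (a + tau - a) with tau in H by ring. nra. }
  pose proof (lin_left _ _ (b - a) ltac:(lra) L1). pose proof (lin_right _ _ (b - a) ltac:(lra) L1).
  pose proof (lin_left _ _ (b - a) ltac:(lra) L2). pose proof (lin_right _ _ (b - a) ltac:(lra) L2).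
  pose proof (L1 ((b - a) / 2) ltac:(lra)). pose proof (L2 ((b - a) / 2) ltac:(lra)).
  destruct (F b ltac:(lra)) as (Fx & Fy & _).
  exists s1, s2. split; [apply sgnR_pm|]. split; [apply sgnR_pm|].
  rewrite (P1 b), (P2 b) by lra.
  repeat split; auto; nra.
Qed.

End Struct.

Lemma middle (a1 a2 s1 s2 b1 b2 e1 e2 e3 q1 q2 p1 p2 r1 r2 w1 w2 : R) :
  (a1 = 1 \/ a1 = -1) -> (a2 = 1 \/ a2 = -1) -> (s1 = 1 \/ s1 = -1) -> (s2 = 1 \/ s2 = -1) ->
  (b1 = 1 \/ b1 = -1) -> (b2 = 1 \/ b2 = -1) ->
  ((0 < e1 /\ 0 < e2 /\ 0 < e3) \/ (e1 < 0 /\ e2 < 0 /\ e3 < 0) \/ (e1 = 0 /\ e2 = 0 /\ e3 = 0)) ->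
  p1 = q1 + 2 * a2 * e1 -> p2 = q2 - 2 * a1 * e1 ->
  r1 = p1 + 2 * s2 * e2 -> r2 = p2 - 2 * s1 * e2 ->
  w1 = r1 + 2 * b2 * e3 -> w2 = r2 - 2 * b1 * e3 ->
  0 <= a1 * q1 -> 0 <= a1 * p1 -> 0 < a1 * (q1 + p1) ->
  0 <= a2 * q2 -> 0 <= a2 * p2 -> 0 < a2 * (q2 + p2) ->
  0 <= s1 * p1 -> 0 <= s1 * r1 -> 0 < s1 * (p1 + r1) ->
  0 <= s2 * p2 -> 0 <= s2 * r2 -> 0 < s2 * (p2 + r2) ->
  0 <= b1 * r1 -> 0 <= b1 * w1 -> 0 < b1 * (r1 + w1) ->
  0 <= b2 * r2 -> 0 <= b2 * w2 -> 0 < b2 * (r2 + w2) ->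
  (p1 = 0 \/ p2 = 0) -> (r1 = 0 \/ r2 = 0) ->
  b1 = - a1 /\ b2 = - a2 /\ ((a1 = s1 /\ a2 = - s2) \/ (a1 = - s1 /\ a2 = s2)) /\ e2 <> 0 /\
  (s1 = s2 -> r1 - r2 = - (p1 - p2)).
Proof.
  intros Ha1 Ha2 Hs1 Hs2 Hb1 Hb2 He Ep1 Ep2 Er1 Er2 Ew1 Ew2.
  subst p1 p2 r1 r2 w1 w2.
  intros.
  destruct He as [(?&?&?)|[(?&?&?)|(?&?&?)]];
  destruct Ha1; destruct Ha2; destruct Hs1; destruct Hs2; subst a1 a2 s1 s2;
  try (exfalso; lra);
  destruct Hb1; destruct Hb2; subst b1 b2; try (exfalso; lra);
  (split; [lra|split; [lra|split; [first [left; split; lra | right; split; lra] | split; [intro; lra | intro; lra]]]]).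
Qed.
Lemma patternA x0 x1 x2 x3 x4 y0 y1 y2 y3 y4 d1 d2 d3 d4 a s :
  (a = 1 \/ a = -1) -> (s = 1 \/ s = -1) ->
  x1 = x0 + (a + - a) * d1 -> y1 = y0 + (a - - a) * x0 * d1 ->
  x2 = x1 + (s + s) * d2 -> y2 = y1 + (s - s) * x1 * d2 ->
  x3 = x2 + (- a + a) * d3 -> y3 = y2 + (- a - a) * x2 * d3 ->
  x4 = x3 + (- s + - s) * d4 -> y4 = y3 + (- s - - s) * x3 * d4 ->
  x2 = - x1 ->
  flow (if Rle_dec d4 d2 then (s, s) else (- s, - s)) (Rabs (d2 - d4)) (flow (a, - a) (d1 + d3) (x0, y0)) = (x4, y4).
Proof.
  intros Ha Hs E1 F1 E2 F2 E3 F3 E4 F4 Hx.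
  assert (x1 = x0) by (rewrite E1; ring). subst x1.
  rewrite Hx in F3. subst y1 y2 y3 y4. rewrite E4, E3, Hx.
  unfold flow, flowx, flowy; simpl.
  destruct (Rle_dec d4 d2); [rewrite Rabs_right by lra|rewrite Rabs_left by lra]; simpl;
  destruct Ha, Hs; subst a s; f_equal; lra.
Qed.

Lemma patternB x0 x1 x2 x3 x4 y0 y1 y2 y3 y4 d1 d2 d3 d4 a s :
  (a = 1 \/ a = -1) -> (s = 1 \/ s = -1) ->
  x1 = x0 + (s + s) * d1 -> y1 = y0 + (s - s) * x0 * d1 ->
  x2 = x1 + (a + - a) * d2 -> y2 = y1 + (a - - a) * x1 * d2 ->
  x3 = x2 + (- s + - s) * d3 -> y3 = y2 + (- s - - s) * x2 * d3 ->
  x4 = x3 + (- a + a) * d4 -> y4 = y3 + (- a - a) * x3 * d4 ->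
  x3 = - x2 ->
  flow (- a, a) (d2 + d4) (flow (if Rle_dec d3 d1 then (s, s) else (- s, - s)) (Rabs (d1 - d3)) (x0, y0)) = (x4, y4).
Proof.
  intros Ha Hs E1 F1 E2 F2 E3 F3 E4 F4 Hx.
  assert (x2 = x1) by (rewrite E2; ring). subst x2.
  rewrite Hx in F4. assert (y1 = y0) by (rewrite F1; ring). subst y1 y2 y3 y4.
  assert (Hx4 : x4 = - x1) by (rewrite E4, Hx; ring). rewrite Hx4.
  set (p := flow (if Rle_dec d3 d1 then (s, s) else (- s, - s)) (Rabs (d1 - d3)) (x0, y0)).
  assert (Hp1 : fst p = - x1).
  { unfold p, flow, flowx. simpl. rewrite E3 in Hx.
    destruct (Rle_dec d3 d1); [rewrite Rabs_right by lra|rewrite Rabs_left by lra]; simpl;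
    destruct Hs; subst s; lra. }
  assert (Hp2 : snd p = y0).
  { unfold p, flow, flowy. simpl.
    destruct (Rle_dec d3 d1); simpl; field. }
  unfold flow at 1, flowx, flowy. rewrite Hp1, Hp2. simpl. f_equal; field.
Qed.

Lemma overlap T lam gamma a b a' b' :
  maximal_regular_arc T lam gamma a b -> maximal_regular_arc T lam gamma a' b' ->
  Rmax a a' < Rmin b b' -> a = a' /\ b = b'.
Proof.
  intros (H0 & H1 & H2 & H3 & H4) (H0' & H1' & H2' & H3' & H4') Hov.
  assert (Hreg : regular_on lam gamma (Rmin a a') (Rmax b b')).
  { intros t Ht.
    assert (a < t < b \/ a' < t < b').
    { revert Ht Hov. unfold Rmin, Rmax. destruct (Rle_dec a a'), (Rle_dec b b'), (Rle_dec a' b), (Rle_dec a b');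
      intros; destruct (Rlt_dec a t), (Rlt_dec t b); try (left; lra); right; lra. }
    destruct H; [apply H3|apply H3']; auto. }
  assert (Hm1 : Rmin a a' <= a) by apply Rmin_l. assert (Hm2 : Rmin a a' <= a') by apply Rmin_r.
  assert (Hm3 : b <= Rmax b b') by apply Rmax_l. assert (Hm4 : b' <= Rmax b b') by apply Rmax_r.
  assert (Hm5 : 0 <= Rmin a a') by (apply Rmin_glb; auto).
  assert (Hm6 : Rmax b b' <= T) by (apply Rmax_lub; auto).
  assert (E1 : Rmin a a' = a /\ Rmax b b' = b).
  { destruct (Req_dec (Rmin a a') a), (Req_dec (Rmax b b') b); auto; exfalso;
    apply (H4 (Rmin a a') (Rmax b b')); auto; lra. }
  assert (E2 : Rmin a a' = a' /\ Rmax b b' = b').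
  { destruct (Req_dec (Rmin a a') a'), (Req_dec (Rmax b b') b'); auto; exfalso;
    apply (H4' (Rmin a a') (Rmax b b')); auto; lra. }
  lra.
Qed.

Lemma eta_F (F : list R) s T : s < T ->
  exists eta, 0 < eta /\ s + eta <= T /\ forall f, In f F -> ~ (s < f < s + eta).
Proof.
  intros H. induction F as [|f F IH].
  - exists (T - s). repeat split; try lra. intros f [].
  - destruct IH as (eta & H1 & H2 & H3).
    destruct (Rlt_dec s f).
    + exists (Rmin eta (f - s)). pose proof (Rmin_l eta (f - s)); pose proof (Rmin_r eta (f - s)).
      repeat split. apply Rmin_pos; lra. lra.
      intros g [<-|Hg]. lra. intros Hc; apply (H3 g Hg); lra.
    + exists eta. repeat split; auto. intros g [<-|Hg]. lra. auto.
Qed.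

Section Chain.
Variables (T : R) (lam gamma : R -> R * R) (arcs : list (R * R)) (F : list R).
Hypotheses (Hmax : forall ab, In ab arcs -> maximal_regular_arc T lam gamma (fst ab) (snd ab))
  (Hcov : forall t, 0 <= t <= T -> (~ In t F <-> exists ab, In ab arcs /\ fst ab < t < snd ab)).

Lemma next_arc s : 0 <= s < T -> (forall ab, In ab arcs -> fst ab < s -> snd ab <= s) ->
  exists b, In (s, b) arcs.
Proof.
  intros Hs Hleft. destruct (eta_F F s T ltac:(lra)) as (eta & He1 & He2 & He3).
  assert (Ht : ~ In (s + eta / 2) F) by (intros Hin; apply (He3 _ Hin); lra).
  apply Hcov in Ht; [|lra]. destruct Ht as ([a b] & Hin & Hab). simpl in Hab.
  destruct (Rtotal_order a s) as [Has|[Has|Has]].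
  - specialize (Hleft _ Hin Has). simpl in Hleft. lra.
  - subst. exists b; auto.
  - exfalso. pose proof (Hmax _ Hin) as (Ha0 & _). simpl in Ha0.
    assert (Ha : ~ In a F) by (intros Hin'; apply (He3 _ Hin'); lra).
    apply Hcov in Ha; [|lra]. destruct Ha as ([a' b'] & Hin' & Hab'). simpl in Hab'.
    destruct (overlap T lam gamma a b a' b' (Hmax _ Hin) (Hmax _ Hin')).
    + unfold Rmax, Rmin. destruct (Rle_dec a a'), (Rle_dec b b'); lra.
    + lra.
Qed.

Lemma after_arc a0 s : In (a0, s) arcs -> forall ab, In ab arcs -> fst ab < s -> snd ab <= s.
Proof.
  intros Hin [a b] Hin' Ha. simpl in *. destruct (Rle_dec b s); auto. exfalso.
  pose proof (Hmax _ Hin) as (H0 & H1 & _). pose proof (Hmax _ Hin') as (H0' & H1' & _). simpl in *.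
  destruct (overlap T lam gamma a0 s a b (Hmax _ Hin) (Hmax _ Hin')).
  - unfold Rmax, Rmin. destruct (Rle_dec a0 a), (Rle_dec s b); lra.
  - lra.
Qed.

Lemma few_arcs (ch : list (R * R)) : NoDup arcs -> (4 <= length arcs)%nat -> (length ch <= 3)%nat ->
  (forall cd, In cd ch -> maximal_regular_arc T lam gamma (fst cd) (snd cd)) ->
  (forall x, 0 <= x < T -> exists cd, In cd ch /\ fst cd <= x < snd cd) -> False.
Proof.
  intros Hnd Hl Hch Hmc Hcv.
  assert (incl arcs ch).
  { intros [a b] Hin. pose proof (Hmax _ Hin) as (H0 & H1 & H2 & _). simpl in *.
    destruct (Hcv a ltac:(lra)) as ([c1 c2] & Hc & Hc1). simpl in Hc1.
    destruct (overlap T lam gamma a b c1 c2 (Hmax _ Hin) (Hmc _ Hc)).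
    - unfold Rmax, Rmin. destruct (Rle_dec a c1), (Rle_dec b c2); lra.
    - subst; auto. }
  pose proof (NoDup_incl_length Hnd H). lia.
Qed.

End Chain.

Lemma switch T lam gamma a s b : maximal_regular_arc T lam gamma a s -> maximal_regular_arc T lam gamma s b ->
  phi1 lam gamma s = 0 \/ phi2 lam gamma s = 0.
Proof.
  intros (H0 & H1 & H2 & H3 & H4) (H0' & H1' & H2' & H3' & H4').
  apply NNPP. intros Hn. apply (H4 a b); try lra.
  intros t Ht. destruct (Rtotal_order t s) as [Hts|[Hts|Hts]].
  - apply H3; lra.
  - subst. split; intros E; apply Hn; auto.
  - apply H3'; lra.
Qed.

Lemma ham_dx l p2 w x0 : derivable_pt_lim (fun x => Ham l (x, p2) w) x0 (fst w * snd l - snd w * snd l).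
Proof. apply is_derive_Reals. unfold Ham, pairing, Y1, Y2. simpl. auto_derive. auto. ring. Qed.

Lemma ham_dy l p1 w y0 : derivable_pt_lim (fun y => Ham l (p1, y) w) y0 0.
Proof. unfold Ham, pairing, Y1, Y2. simpl. apply derivable_pt_lim_const. Qed.

Lemma pm_abs s : s = 1 \/ s = -1 -> Rabs s <= 1 /\ Rabs (- s) <= 1.
Proof. intros [-> | ->]; unfold Rabs; repeat destruct Rcase_abs; lra. Qed.

Lemma ec_tri c : forall d1 d2 d3, 0 < d1 -> 0 < d2 -> 0 < d3 ->
    (0 < c * d1 /\ 0 < c * d2 /\ 0 < c * d3) \/ (c * d1 < 0 /\ c * d2 < 0 /\ c * d3 < 0) \/
    (c * d1 = 0 /\ c * d2 = 0 /\ c * d3 = 0).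
Proof.
  intros d1 d2 d3 Hd1 Hd2 Hd3. destruct (Rtotal_order c 0) as [Hc|[Hc|Hc]].
  - right; left. repeat split; nra.
  - right; right. subst c. repeat split; ring.
  - left. repeat split; nra.
Qed.

Theorem mainTheorem8 (T : R) (gamma : R -> R * R) (n : nat) :
  regular_bang_bang_arcs T gamma n -> (4 <= n)%nat -> ~ time_minimizer T gamma.
Proof.
  intros (u & lam & arcs & F & Hext & Hnd & Hlen & Hmax & Hcov) Hn.
  destruct Hext as (Hadm & [Hacl1 Hacl2] & Hnz & (Ne & HNe & Hde) & (lam0 & Hlam0 & (Nh & HNh & Hh))).
  destruct (admissible_unfold _ _ _ Hadm) as (HT & _ & _ & (Nu & HNu & Hu) & Hacx & Hacy & (Nd & HNd & Hd)).
  set (N := fun t => (Nu t \/ Nd t) \/ (Ne t \/ Nh t)).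
  assert (HN : negligible N) by (apply negligible_union; apply negligible_union; auto).
  set (c := snd (lam 0)).
  assert (Hdl2 : forall t, 0 < t < T -> ~ N t -> derivable_pt_lim (fun s => snd (lam s)) t 0).
  { intros t Ht HNt.
    destruct (Hde t Ht (fun H => HNt (or_intror (or_introl H)))) as (dl1 & dl2 & dg1 & dg2 & D1 & D2 & D3 & D4 & D5 & D6 & D7 & D8).
    assert (- dl2 = 0) by (eapply uniqueness_limite; [apply D6| apply ham_dy]).
    replace 0 with dl2 by lra. auto. }
  assert (Hl2 : forall t, 0 <= t <= T -> snd (lam t) = c).
  { intros t Ht. destruct (Req_dec t 0). subst; reflexivity.
    pose proof (key 0 t 0 (fun s => snd (lam s)) N ltac:(lra) (acI_sub 0 T 0 t _ Hacl2 ltac:(lra) ltac:(lra)) HN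
      (fun tau Htau HNt => Hdl2 tau ltac:(lra) HNt)) as Hk. simpl in Hk. unfold c. lra. }
  assert (Hdl : forall t, 0 < t < T -> ~ N t ->
    derivable_pt_lim (fun s => fst (lam s)) t (- (fst (u t) * c - snd (u t) * c))).
  { intros t Ht HNt.
    destruct (Hde t Ht (fun H => HNt (or_intror (or_introl H)))) as (dl1 & dl2 & dg1 & dg2 & D1 & D2 & D3 & D4 & D5 & D6 & D7 & D8).
    assert (E : - dl1 = fst (u t) * snd (lam t) - snd (u t) * snd (lam t)) by (eapply uniqueness_limite; [apply D5| apply ham_dx]).
    rewrite Hl2 in E by lra. replace (- (fst (u t) * c - snd (u t) * c)) with dl1 by lra. auto. }
  assert (Hbd : forall t, 0 < t < T -> ~ N t -> Rabs (fst (u t)) <= 1 /\ Rabs (snd (u t)) <= 1).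
  { intros t Ht HNt. apply Hu; auto. intros H; apply HNt; left; left; auto. }
  assert (Hdg : forall t, 0 < t < T -> ~ N t ->
    derivable_pt_lim (fun s => fst (gamma s)) t (fst (u t) * 1 + snd (u t) * 1) /\
    derivable_pt_lim (fun s => snd (gamma s)) t (fst (u t) * fst (gamma t) + snd (u t) * - fst (gamma t))).
  { intros t Ht HNt. apply Hd; auto. intros H; apply HNt; left; right; auto. }
  assert (Hham : forall t, 0 < t < T -> ~ N t ->
    fst (u t) * phi1 lam gamma t + snd (u t) * phi2 lam gamma t =
    Rabs (phi1 lam gamma t) + Rabs (phi2 lam gamma t)).
  { intros t Ht HNt. destruct (Hh t Ht (fun H => HNt (or_intror (or_intror H)))) as [E1 E2].
    unfold phi1, phi2. unfold Ham in E1. lra. }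
  pose proof (arc_pack T gamma lam u c N Hacx Hacy Hacl1 Hacl2 HN Hbd Hdg Hdl Hl2 Hham) as AP.
  assert (Hdiff : forall t, 0 <= t <= T -> phi1 lam gamma t - phi2 lam gamma t = 2 * c * fst (gamma t)).
  { intros t Ht. rewrite phi1_eq, phi2_eq, Hl2 by auto. ring. }
  assert (HTpos : 0 < T).
  { destruct arcs as [|ab arcs']. simpl in Hlen; lia.
    destruct (Hmax ab (or_introl eq_refl)) as (?&?&?&_). lra. }
  assert (Hlen4 : (4 <= length arcs)%nat) by lia.
  destruct (next_arc T lam gamma arcs F Hmax Hcov 0 ltac:(lra)) as [t1 In1].
  { intros ab Hin Hlt. destruct (Hmax ab Hin) as (?&_). lra. }
  pose proof (Hmax _ In1) as M1. simpl in M1.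
  assert (Ht1 : t1 < T).
  { destruct M1 as (_&?&?&_). destruct (Rlt_dec t1 T); auto. exfalso.
    apply (few_arcs T lam gamma arcs Hmax ((0, t1) :: nil) Hnd Hlen4); simpl; auto.
    intros cd [<-|[]]; auto.
    intros x Hx. exists (0, t1); simpl; split; auto; lra. }
  destruct (next_arc T lam gamma arcs F Hmax Hcov t1 ltac:(destruct M1 as (_&?&_); lra) (after_arc T lam gamma arcs Hmax _ _ In1)) as [t2 In2].
  pose proof (Hmax _ In2) as M2. simpl in M2.
  assert (Ht2 : t2 < T).
  { destruct M1 as (_&?&?&_). destruct M2 as (_&?&?&_). destruct (Rlt_dec t2 T); auto. exfalso.
    apply (few_arcs T lam gamma arcs Hmax ((0, t1) :: (t1, t2) :: nil) Hnd Hlen4); simpl; auto.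
    intros cd [<-|[<-|[]]]; auto.
    intros x Hx. destruct (Rlt_dec x t1). exists (0, t1); simpl; split; auto; lra.
    exists (t1, t2); simpl; split; auto; lra. }
  destruct (next_arc T lam gamma arcs F Hmax Hcov t2 ltac:(destruct M2 as (_&?&_); destruct M1 as (_&?&_); lra) (after_arc T lam gamma arcs Hmax _ _ In2)) as [t3 In3].
  pose proof (Hmax _ In3) as M3. simpl in M3.
  assert (Ht3 : t3 < T).
  { destruct M1 as (_&?&?&_). destruct M2 as (_&?&?&_). destruct M3 as (_&?&?&_). destruct (Rlt_dec t3 T); auto. exfalso.
    apply (few_arcs T lam gamma arcs Hmax ((0, t1) :: (t1, t2) :: (t2, t3) :: nil) Hnd Hlen4); simpl; auto.
    intros cd [<-|[<-|[<-|[]]]]; auto.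
    intros x Hx. destruct (Rlt_dec x t1). exists (0, t1); simpl; split; auto; lra.
    destruct (Rlt_dec x t2). exists (t1, t2); simpl; split; auto; lra.
    exists (t2, t3); simpl; split; auto; lra. }
  destruct (next_arc T lam gamma arcs F Hmax Hcov t3 ltac:(destruct M3 as (_&?&_); destruct M2 as (_&?&_); destruct M1 as (_&?&_); lra) (after_arc T lam gamma arcs Hmax _ _ In3)) as [t4 In4].
  pose proof (Hmax _ In4) as M4. simpl in M4.
  pose proof (switch _ _ _ _ _ _ M1 M2) as S1.
  pose proof (switch _ _ _ _ _ _ M2 M3) as S2.
  pose proof (switch _ _ _ _ _ _ M3 M4) as S3.
  destruct M1 as (H01 & H11 & H21 & R1 & _). destruct M2 as (H02 & H12 & H22 & R2 & _).
  destruct M3 as (H03 & H13 & H23 & R3 & _). destruct M4 as (H04 & H14 & H24 & R4 & _).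
  destruct (AP 0 t1 H01 H11 H21 R1) as (a1 & a2 & Pa1 & Pa2 & X1 & Y1' & F11 & F21 & A1 & A2 & A3 & A4 & A5 & A6).
  destruct (AP t1 t2 H02 H12 H22 R2) as (s1 & s2 & Ps1 & Ps2 & X2 & Y2' & F12 & F22 & B1 & B2 & B3 & B4 & B5 & B6).
  destruct (AP t2 t3 H03 H13 H23 R3) as (b1 & b2 & Pb1 & Pb2 & X3 & Y3' & F13 & F23 & C1 & C2 & C3 & C4 & C5 & C6).
  destruct (AP t3 t4 H04 H14 H24 R4) as (f1 & f2 & Pf1 & Pf2 & X4 & Y4' & F14 & F24 & D1 & D2 & D3 & D4 & D5 & D6).
  pose proof (ec_tri c) as Hec.
  destruct (middle a1 a2 s1 s2 b1 b2 (c * (t1 - 0)) (c * (t2 - t1)) (c * (t3 - t2))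
     (phi1 lam gamma 0) (phi2 lam gamma 0) (phi1 lam gamma t1) (phi2 lam gamma t1)
     (phi1 lam gamma t2) (phi2 lam gamma t2) (phi1 lam gamma t3) (phi2 lam gamma t3))
    as (Eb1 & Eb2 & Dif1 & Hc2 & Xrel2); auto; try (apply Hec; lra).
  destruct (middle s1 s2 b1 b2 f1 f2 (c * (t2 - t1)) (c * (t3 - t2)) (c * (t4 - t3))
     (phi1 lam gamma t1) (phi2 lam gamma t1) (phi1 lam gamma t2) (phi2 lam gamma t2)
     (phi1 lam gamma t3) (phi2 lam gamma t3) (phi1 lam gamma t4) (phi2 lam gamma t4))
    as (Ef1 & Ef2 & _ & Hc3 & Xrel3); auto; try (apply Hec; lra).
  assert (Hcnz : c <> 0) by (intros E; apply Hc2; rewrite E; ring).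
  subst b1 b2 f1 f2.
  assert (Hg0 : gamma 0 = (fst (gamma 0), snd (gamma 0))) by apply surjective_pairing.
  assert (Hg4 : gamma t4 = (fst (gamma t4), snd (gamma t4))) by apply surjective_pairing.
  destruct (Req_dec a1 a2) as [Ea|Ea].
  - (* pattern B: first arc moves x *)
    subst a2.
    assert (Es : s2 = - s1) by (destruct Dif1 as [[? ?]|[? ?]]; destruct Pa1, Ps1, Ps2; subst; lra).
    subst s2.
    assert (Hx3 : fst (gamma t3) = - fst (gamma t2)).
    { specialize (Xrel3 eq_refl). rewrite !Hdiff in Xrel3 by lra.
      apply (Rmult_eq_reg_l (2 * c)); [|lra]. lra. }
    apply (competitor T gamma u t4 (Rabs ((t1 - 0) - (t3 - t2))) ((t2 - t1) + (t4 - t3))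
      (if Rle_dec (t3 - t2) (t1 - 0) then (a1, a1) else (- a1, - a1)) (- s1, s1)); auto.
    + apply Rabs_pos.
    + lra.
    + unfold Rabs; destruct Rcase_abs; lra.
    + destruct (pm_abs a1 Pa1). destruct (Rle_dec (t3 - t2) (t1 - 0)); simpl; auto; try (rewrite Rabs_Ropp; auto).
    + destruct (pm_abs a1 Pa1). destruct (Rle_dec (t3 - t2) (t1 - 0)); simpl; auto; try (rewrite Rabs_Ropp; auto).
    + destruct (pm_abs s1 Ps1); simpl; auto.
    + destruct (pm_abs s1 Ps1); simpl; auto.
    + rewrite Hg0, Hg4.
      apply (patternB _ (fst (gamma t1)) (fst (gamma t2)) (fst (gamma t3)) _ _
                      (snd (gamma t1)) (snd (gamma t2)) (snd (gamma t3))); auto;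
      first [rewrite X4; ring | rewrite Y4'; ring | rewrite X3; ring | rewrite Y3'; ring].
  - (* pattern A: first arc moves y *)
    assert (Ea2 : a2 = - a1) by (destruct Pa1, Pa2; subst; lra).
    subst a2.
    assert (Es : s2 = s1) by (destruct Dif1 as [[? ?]|[? ?]]; destruct Pa1, Ps1, Ps2; subst; lra).
    subst s2.
    assert (Hx2 : fst (gamma t2) = - fst (gamma t1)).
    { specialize (Xrel2 eq_refl). rewrite !Hdiff in Xrel2 by lra.
      apply (Rmult_eq_reg_l (2 * c)); [|lra]. lra. }
    apply (competitor T gamma u t4 ((t1 - 0) + (t3 - t2)) (Rabs ((t2 - t1) - (t4 - t3)))
      (a1, - a1) (if Rle_dec (t4 - t3) (t2 - t1) then (s1, s1) else (- s1, - s1))); auto.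
    + lra.
    + apply Rabs_pos.
    + unfold Rabs; destruct Rcase_abs; lra.
    + destruct (pm_abs a1 Pa1); simpl; auto.
    + destruct (pm_abs a1 Pa1); simpl; auto.
    + destruct (pm_abs s1 Ps1). destruct (Rle_dec (t4 - t3) (t2 - t1)); simpl; auto; try (rewrite Rabs_Ropp; auto).
    + destruct (pm_abs s1 Ps1). destruct (Rle_dec (t4 - t3) (t2 - t1)); simpl; auto; try (rewrite Rabs_Ropp; auto).
    + rewrite Hg0, Hg4.
      apply (patternA _ (fst (gamma t1)) (fst (gamma t2)) (fst (gamma t3)) _ _
                      (snd (gamma t1)) (snd (gamma t2)) (snd (gamma t3))); auto;
      first [rewrite X4; ring | rewrite Y4'; ring | rewrite X3; ring | rewrite Y3'; ring].
Qed.
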